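(* Let $V\subset\mathcal{A}_0$ be compact and let $V^T$ be complete. Then for every continuous linear functional $\lambda$ on $\mathcal{A}$, with $\lambda:=g$, $$\lambda(V)=\bigcup_{f\in\mathrm{bor}(V)}(f*g)(\overline D),\qquad \partial\lambda(V)\subset\bigcup_{f\in\mathrm{bor}(V)}(f*g)(\partial D).$$
   Context: $D=\{z:|z|<1\}$, $\overline D$ its closure, $\partial D$ the unit circle. $\mathcal{A}$ is the space of functions $f(z)=\sum_{k\ge0}a_k(f)z^k$ analytic in $D$, with the topology of locally uniform convergence; $\mathcal{A}_0=\{f\in\mathcal{A}: a_0(f)=1\}$. $\mathcal{A}(\overline D)$ is the set of functions analytic in some disk $\{|z|<R\}$ with $R>1$, and $\mathcal{A}_0(\overline D)=\{g\in\mathcal{A}(\overline D):a_0(g)=1\}$. The Hadamard product is $(f*g)(z)=\sum_{k\ge0}a_k(f)a_k(g)z^k$. Every continuous linear functional $\lambda$ on $\mathcal{A}$ has the form $\lambda(f)=(f*g)(1)$ for a function $g\in\mathcal{A}(\overline D)$; this is written $\lambda:=g$. $V^T=\{g\in\mathcal{A}_0(\overline D): (f*g)(1)\ne0 \ \forall f\in V\}$. For $x\in\overline D$, $(P_xf)(z)=f(xz)$; a set $W$ is complete if $P_xf\in W$ for all $f\in W$, $x\in\overline D$. Let $e\equiv1$. If $V\ne\{e\}$, an element $f\in V$ is a border element of $V$ if whenever $f=P_xg$ with $g\in V$, $x\in\overline D$, then $|x|=1$; $\mathrm{bor}(V)$ is the set of border elements. If $V=\{e\}$, $\mathrm{bor}(V)=\{e\}$.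 *)

(* Defs.v *)
From Stdlib Require Import Reals List.
From Coquelicot Require Import Coquelicot.
Open Scope R_scope.

(* A function f(z) = sum_k a_k z^k is represented by its coefficient sequence. *)
Definition coef := nat -> C.

Definition is_sum (u : nat -> C) (w : C) : Prop :=
  is_series (u : nat -> C_NormedModule) w.

Definition eval (a : coef) (z w : C) : Prop :=
  is_sum (fun k => (a k * Cpow z k)%C) w.

(* A : analytic in D  <=> radius of convergence >= 1 *)
Definition in_A (a : coef) : Prop :=
  forall r : R, 0 <= r < 1 -> ex_series (fun k => Cmod (a k) * r ^ k).
Definition in_A0 (a : coef) : Prop := in_A a /\ a 0%nat = 1%C.

(* A(closed D) : analytic in some disk |z| < R with R > 1 *)
Definition in_Abar (b : coef) : Prop :=
  exists R0 : R, 1 < R0 /\ ex_series (fun k => Cmod (b k) * R0 ^ k).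
Definition in_Abar0 (b : coef) : Prop := in_Abar b /\ b 0%nat = 1%C.

Definition hadamard (a b : coef) : coef := fun k => (a k * b k)%C.

(* (P_x f)(z) = f(xz) *)
Definition Pmap (x : C) (a : coef) : coef := fun k => (a k * Cpow x k)%C.

Definition e_one : coef := fun k => match k with O => 1%C | S _ => 0%C end.

(* Topology of locally uniform convergence on A: basic neighbourhoods
   { g : |f(z) - g(z)| < eps for all |z| <= r }, 0 <= r < 1, eps > 0. *)
Definition lu_near (f : coef) (r eps : R) (g : coef) : Prop :=
  forall z u v, Cmod z <= r -> eval f z u -> eval g z v -> Cmod (u - v)%C < eps.

Definition lu_open (U : coef -> Prop) : Prop :=
  forall f, in_A f -> U f ->
    exists r eps, 0 <= r < 1 /\ 0 < eps /\
      forall g, in_A g -> lu_near f r eps g -> U g.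

Definition lu_compact (V : coef -> Prop) : Prop :=
  (forall f, V f -> in_A f) /\
  forall (I : Type) (U : I -> coef -> Prop),
    (forall i, lu_open (U i)) ->
    (forall f, V f -> exists i, U i f) ->
    exists l : list I, forall f, V f -> exists i, In i l /\ U i f.

Definition dualT (V : coef -> Prop) (g : coef) : Prop :=
  in_Abar0 g /\ forall f, V f -> forall w, eval (hadamard f g) 1%C w -> w <> 0%C.

Definition complete (W : coef -> Prop) : Prop :=
  forall f x, W f -> Cmod x <= 1 -> W (Pmap x f).

Definition is_singleton_e (V : coef -> Prop) : Prop :=
  forall h, V h <-> h = e_one.

Definition bor (V : coef -> Prop) (f : coef) : Prop :=
  (is_singleton_e V /\ f = e_one) \/
  (~ is_singleton_e V /\ V f /\
     forall g x, V g -> Cmod x <= 1 -> f = Pmap x g -> Cmod x = 1).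

(* lambda(V) for lambda := g, i.e. lambda(f) = (f*g)(1) *)
Definition lam_image (V : coef -> Prop) (g : coef) (w : C) : Prop :=
  exists f, V f /\ eval (hadamard f g) 1%C w.

Definition boundaryC (S : C -> Prop) (w : C) : Prop :=
  forall eps : R, 0 < eps ->
    (exists u, S u /\ Cmod (u - w)%C < eps) /\
    (exists u, ~ S u /\ Cmod (u - w)%C < eps).

(* Main.v *)
Require Import Defs.
From Stdlib Require Import Reals Rtopology List Arith ZArith Lra Lia Psatz Classical ClassicalEpsilon FunctionalExtensionality.
From Coquelicot Require Import Coquelicot.
Open Scope R_scope.

Lemma eventually_proper : ProperFilter' (@eventually).
Proof. apply Proper_StrongProper, eventually_filter. Qed.

Lemma is_sum_unique u a b : is_sum u a -> is_sum u b -> a = b.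
Proof. unfold is_sum, is_series. intros Ha Hb.
  eapply (filterlim_locally_unique (F:=eventually)); eauto. Qed.

Lemma is_sum_ex (u : nat -> C) (b : nat -> R) :
  (forall n, Cmod (u n) <= b n) -> ex_series b -> exists w, is_sum u w.
Proof. intros H Hb.
  assert (E : ex_series (K:=C_AbsRing) (V:=C_CompleteNormedModule) u).
  { apply (ex_series_le (K:=C_AbsRing) (V:=C_CompleteNormedModule) u b); auto. }
  destruct E as [w Hw]. exists w. exact Hw. Qed.

Lemma sum_n_nonneg (b : nat -> R) N : (forall n, 0 <= b n) -> 0 <= sum_n b N.
Proof. intros H. induction N. rewrite sum_O. auto. rewrite sum_Sn. unfold plus; simpl.
  specialize (H (S N)). lra. Qed.

Lemma is_sum_bound (u : nat -> C) w (b : nat -> R) B :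
  is_sum u w -> (forall n, Cmod (u n) <= b n) -> is_series b B -> Cmod w <= B.
Proof. intros Hw Hu Hb.
  assert (L1 : filterlim (fun N => norm (sum_n (u : nat -> C_NormedModule) N)) eventually (locally (norm (w : C_NormedModule)))).
  { eapply filterlim_comp. exact Hw. apply filterlim_norm. }
  assert (H := filterlim_le (F:=eventually)
     (fun N => norm (sum_n (u : nat -> C_NormedModule) N)) (sum_n b) (norm (w : C_NormedModule)) B).
  simpl in H. apply H.
  - exists 0%nat. intros N _. eapply Rle_trans. apply norm_sum_n_m.
    apply sum_n_m_le. intros k. apply Hu.
  - exact L1.
  - exact Hb.
Qed.

Lemma is_sum_plus u v a b : is_sum u a -> is_sum v b -> is_sum (fun n => (u n + v n)%C) (a + b)%C.
Proof. intros. apply (is_series_plus (K:=C_AbsRing) (V:=C_NormedModule)); auto. Qed.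

Lemma is_sum_scal c u a : is_sum u a -> is_sum (fun n => (c * u n)%C) (c * a)%C.
Proof. intros. apply (is_series_scal (K:=C_AbsRing) (V:=C_NormedModule)); auto. Qed.

Lemma is_sum_opp u a : is_sum u a -> is_sum (fun n => (- u n)%C) (- a)%C.
Proof. intros. apply (is_series_opp (K:=C_AbsRing) (V:=C_NormedModule)) in H. exact H. Qed.

Lemma is_sum_minus u v a b : is_sum u a -> is_sum v b -> is_sum (fun n => (u n - v n)%C) (a - b)%C.
Proof. intros. apply (is_series_minus (K:=C_AbsRing) (V:=C_NormedModule)); auto. Qed.

Lemma is_sum_ext u v a : (forall n, u n = v n) -> is_sum u a -> is_sum v a.
Proof. intros. eapply (is_series_ext (K:=C_AbsRing) (V:=C_NormedModule)); eauto. Qed.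
Definition abs_conv (c : coef) (r : R) := ex_series (fun k => Cmod (c k) * r ^ k).

Lemma term_le_sum_n (a : nat -> R) k : (forall n, 0 <= a n) -> a k <= sum_n a k.
Proof. intros Hp. destruct k. rewrite sum_O. lra. rewrite sum_Sn. unfold plus; simpl.
  pose proof (sum_n_nonneg a k Hp). lra. Qed.

Lemma sum_n_le_Series (a : nat -> R) k : (forall n, 0 <= a n) -> ex_series a -> sum_n a k <= Series a.
Proof. intros Hp He. apply Series_correct in He.
  assert (Hl : is_lim_seq (sum_n a) (Series a)) by exact He.
  apply (is_lim_seq_incr_compare _ _ Hl).
  intros n; rewrite sum_Sn; unfold plus; simpl; specialize (Hp (S n)); lra. Qed.

Lemma term_le_Series (a : nat -> R) k : (forall n, 0 <= a n) -> ex_series a -> a k <= Series a.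
Proof. intros. eapply Rle_trans. apply term_le_sum_n; auto. apply sum_n_le_Series; auto. Qed.

Lemma Series_nonneg (a : nat -> R) : (forall n, 0 <= a n) -> ex_series a -> 0 <= Series a.
Proof. intros. eapply Rle_trans. apply (H 0%nat). apply term_le_Series; auto. Qed.

Lemma ex_series_R_le (a b : nat -> R) : (forall n, 0 <= a n <= b n) -> ex_series b -> ex_series a.
Proof. intros H Hb. apply (ex_series_le (K:=R_AbsRing) (V:=R_CompleteNormedModule) a b); auto.
  intros n. change (norm (a n)) with (Rabs (a n)). rewrite Rabs_pos_eq; apply H. Qed.

Lemma abs_conv_mono c r r' : abs_conv c r -> 0 <= r' <= r -> abs_conv c r'.
Proof. intros H Hr. apply (ex_series_R_le _ (fun k => Cmod (c k) * r ^ k)); [|exact H]. intros n. split.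
  apply Rmult_le_pos. apply Cmod_ge_0. apply pow_le; lra.
  apply Rmult_le_compat_l. apply Cmod_ge_0. apply pow_incr; lra. Qed.

Lemma abs_conv_nonneg c r n : 0 <= r -> 0 <= Cmod (c n) * r ^ n.
Proof. intros. apply Rmult_le_pos. apply Cmod_ge_0. apply pow_le; lra. Qed.

Lemma eval_ex c r z : abs_conv c r -> Cmod z <= r -> exists w, eval c z w.
Proof. intros H Hz. refine (is_sum_ex _ _ _ H). intros n. rewrite Cmod_mult, Cmod_pow.
  apply Rmult_le_compat_l. apply Cmod_ge_0. apply pow_incr. split; auto. apply Cmod_ge_0. Qed.

Lemma eval_bound c r z w : abs_conv c r -> Cmod z <= r -> eval c z w ->
  Cmod w <= Series (fun k => Cmod (c k) * r ^ k).
Proof. intros H Hz Hw. eapply is_sum_bound. exact Hw. 2: apply Series_correct, H.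
  intros n. cbv beta. rewrite Cmod_mult, Cmod_pow.
  apply Rmult_le_compat_l. apply Cmod_ge_0. apply pow_incr. split; auto. apply Cmod_ge_0. Qed.

Definition val (c : coef) (z : C) : C := epsilon (@inhabits C (RtoC 0)) (fun w => eval c z w).

Lemma val_eval c z : (exists w, eval c z w) -> eval c z (val c z).
Proof. intros H. unfold val. apply (epsilon_spec (@inhabits C (RtoC 0)) (fun w => eval c z w)). exact H. Qed.

Lemma eval_val c z w : eval c z w -> val c z = w.
Proof. intros H. apply (is_sum_unique _ _ _ (val_eval c z (ex_intro _ w H)) H). Qed.

Lemma val_eval_conv c r z : abs_conv c r -> Cmod z <= r -> eval c z (val c z).
Proof. intros. apply val_eval. eapply eval_ex; eauto. Qed.

Lemma in_A_bounded f r : in_A f -> 0 <= r < 1 -> exists M, forall k, Cmod (f k) * r^k <= M.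
Proof. intros Hf Hr. exists (Series (fun k => Cmod (f k) * r ^ k)). intros k.
  apply (term_le_Series (fun k => Cmod (f k) * r ^ k)). intros; apply abs_conv_nonneg; lra. apply Hf; auto. Qed.

Lemma had_conv f g : in_A f -> in_Abar g -> exists rho, 1 < rho /\ abs_conv (hadamard f g) rho.
Proof. intros Hf [R0 [HR0 Hg]].
  set (rho := (1 + R0) / 2). set (r := rho / R0).
  assert (Hr : 0 <= r < 1). { unfold r, rho. split. apply Rle_mult_inv_pos; lra.
    apply (Rmult_lt_reg_r R0). lra. field_simplify; lra. }
  destruct (in_A_bounded f r Hf Hr) as [M HM].
  exists rho. split. unfold rho; lra.
  apply (ex_series_R_le _ (fun k => M * (Cmod (g k) * R0 ^ k))).
  - intros k. split. apply abs_conv_nonneg. unfold rho; lra.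
    unfold hadamard. rewrite Cmod_mult.
    replace rho with (r * R0) by (unfold r; field; lra). rewrite Rpow_mult_distr.
    replace (Cmod (f k) * Cmod (g k) * (r ^ k * R0 ^ k)) with ((Cmod (f k) * r^k) * (Cmod (g k) * R0 ^ k)) by ring.
    apply Rmult_le_compat_r. apply abs_conv_nonneg; lra. apply HM.
  - apply (ex_series_scal_l (K:=R_AbsRing) (V:=R_NormedModule) M) in Hg. exact Hg.
Qed.

Lemma pow_diff_bound (z z' : C) r k : Cmod z <= r -> Cmod z' <= r ->
  Cmod (Cpow z (S k) - Cpow z' (S k)) <= INR (S k) * r ^ k * Cmod (z - z').
Proof. intros Hz Hz'. assert (0 <= r) by (eapply Rle_trans; [apply Cmod_ge_0|eauto]).
  induction k.
  - simpl. replace (z * 1 - z' * 1)%C with (z - z')%C by ring. lra.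
  - replace (Cpow z (S (S k)) - Cpow z' (S (S k)))%C with
      (z * (Cpow z (S k) - Cpow z' (S k)) + (z - z') * Cpow z' (S k))%C by (simpl; ring).
    eapply Rle_trans. apply Cmod_triangle. rewrite !Cmod_mult, Cmod_pow.
    assert (A1 : Cmod z * Cmod (Cpow z (S k) - Cpow z' (S k)) <= r * (INR (S k) * r ^ k * Cmod (z - z'))).
    { apply Rmult_le_compat; auto; apply Cmod_ge_0. }
    assert (A2 : Cmod (z - z') * Cmod z' ^ S k <= Cmod (z - z') * r ^ S k).
    { apply Rmult_le_compat_l. apply Cmod_ge_0. apply pow_incr. split; auto. apply Cmod_ge_0. }
    rewrite S_INR. simpl in *. nra.
Qed.

Lemma pow_lin_bound r rho k : 0 <= r < rho -> INR (S k) * r ^ k * (rho - r) + r ^ (S k) <= rho ^ (S k).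
Proof. intros Hr. induction k.
  - simpl. lra.
  - rewrite S_INR. 
    assert (H1 : r ^ S k <= rho ^ S k) by (apply pow_incr; lra).
    assert (H2 : 0 <= r ^ S k) by (apply pow_le; lra).
    replace ((INR (S k) + 1) * r ^ S k * (rho - r) + r ^ S (S k)) with
      (r * (INR (S k) * r ^ k * (rho - r) + r ^ S k) + r ^ S k * (rho - r)) by (simpl; ring).
    replace (rho ^ S (S k)) with (rho * rho ^ S k) by (simpl; ring).
    assert (r * (INR (S k) * r ^ k * (rho - r) + r ^ S k) <= r * rho ^ S k) by (apply Rmult_le_compat_l; lra).
    nra.
Qed.

Lemma val_lip c rho r z z' : abs_conv c rho -> 0 <= r < rho -> Cmod z <= r -> Cmod z' <= r ->
  Cmod (val c z - val c z') <= Series (fun k => Cmod (c k) * rho ^ k) / (rho - r) * Cmod (z - z').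
Proof. intros Hc Hr Hz Hz'.
  assert (Ez := val_eval_conv c rho z Hc ltac:(lra)).
  assert (Ez' := val_eval_conv c rho z' Hc ltac:(lra)).
  pose proof (is_sum_minus _ _ _ _ Ez Ez') as D.
  replace (Series (fun k => Cmod (c k) * rho ^ k) / (rho - r) * Cmod (z - z')) with
    (Series (fun k => Cmod (c k) * rho ^ k) * (Cmod (z - z') / (rho - r))) by (field; lra).
  eapply is_sum_bound. exact D.
  2:{ apply (is_series_scal_r (Cmod (z - z') / (rho - r))). apply Series_correct. exact Hc. }
  intros n. simpl.
  replace (c n * Cpow z n - c n * Cpow z' n)%C with (c n * (Cpow z n - Cpow z' n))%C by ring.
  rewrite Cmod_mult.
  replace (Cmod (c n) * rho ^ n * (Cmod (z - z') / (rho - r))) with (Cmod (c n) * (rho ^ n * Cmod (z - z') / (rho - r))) by (field; lra).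
  apply Rmult_le_compat_l. apply Cmod_ge_0.
  destruct n.
  - replace (Cpow z 0 - Cpow z' 0)%C with (RtoC 0) by (simpl; ring). rewrite Cmod_0. simpl.
    apply Rmult_le_pos. apply Rmult_le_pos. lra. apply Cmod_ge_0. apply Rlt_le, Rinv_0_lt_compat; lra.
  - eapply Rle_trans. apply (pow_diff_bound z z' r n Hz Hz').
    pose proof (pow_lin_bound r rho n ltac:(lra)).
    assert (0 <= r ^ S n) by (apply pow_le; lra).
    apply (Rmult_le_reg_r (rho - r)). lra.
    replace (rho ^ S n * Cmod (z - z') / (rho - r) * (rho - r)) with (rho ^ S n * Cmod (z - z')) by (field; lra).
    pose proof (Cmod_ge_0 (z - z')). nra.
Qed.
Fixpoint fsum (f : nat -> C) (N : nat) : C :=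
  match N with O => 0%C | S n => (fsum f n + f n)%C end.

Lemma sum_n_zero (a : nat -> C) n : (forall m, (m <= n)%nat -> a m = RtoC 0) -> sum_n (a : nat -> C_NormedModule) n = RtoC 0.
Proof. intros H. induction n. rewrite sum_O. apply H; lia.
  rewrite sum_Sn, IHn. rewrite (H (S n)) by lia. apply (plus_zero_l (G:=C_NormedModule)).
  intros; apply H; lia. Qed.

Lemma is_sum_zero (u : nat -> C) : (forall n, u n = RtoC 0) -> is_sum u (RtoC 0).
Proof. intros H. unfold is_sum, is_series.
  apply (filterlim_ext (fun _ => (RtoC 0 : C_NormedModule))).
  intros n. symmetry. apply sum_n_zero. intros; apply H.
  apply filterlim_const. Qed.

Lemma is_sum_fsum (u : nat -> nat -> C) (U : nat -> C) N :
  (forall j, is_sum (u j) (U j)) -> is_sum (fun m => fsum (fun j => u j m) N) (fsum U N).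
Proof. intros H. induction N; simpl.
  - apply is_sum_zero. auto.
  - apply is_sum_plus; auto. Qed.

Lemma Cmod_fsum_le (f : nat -> C) N e : (forall j, Cmod (f j) <= e) -> Cmod (fsum f N) <= INR N * e.
Proof. intros H. induction N; simpl fsum. rewrite Cmod_0. simpl; lra.
  eapply Rle_trans. apply Cmod_triangle. rewrite S_INR. specialize (H N). lra. Qed.

Lemma fsum_const N : fsum (fun _ => 1%C) N = RtoC (INR N).
Proof. induction N; simpl fsum. reflexivity. rewrite IHN, S_INR. rewrite RtoC_plus. reflexivity. Qed.

Lemma fsum_geom (z : C) N : (fsum (fun j => Cpow z j) N * (z - 1) = Cpow z N - 1)%C.
Proof. induction N; simpl. ring. rewrite Cmult_plus_distr_r, IHN. ring. Qed.

Lemma fsum_ext f g N : (forall j, f j = g j) -> fsum f N = fsum g N.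
Proof. intros H; induction N; simpl; congruence. Qed.

Lemma tail_small (a : nat -> R) : (forall n, 0 <= a n) -> ex_series a ->
  forall eps, 0 < eps -> exists N0, forall N, (N0 <= N)%nat -> Series (fun k => a (N + k)%nat) < eps.
Proof. intros Hp He eps Heps.
  pose proof (Series_correct _ He) as HS. unfold is_series in HS.
  pose proof (proj1 (filterlim_locally (F:=eventually) (sum_n a) (Series a)) HS (mkposreal eps Heps)) as HS2. clear HS. rename HS2 into HS.
  destruct HS as [N1 HN1]. exists (S N1). intros N HN.
  pose proof (Series_incr_n a N ltac:(lia) He) as E.
  specialize (HN1 (pred N) ltac:(lia)). unfold ball in HN1; simpl in HN1. unfold AbsRing_ball in HN1.
  rewrite sum_n_Reals in HN1. unfold abs, minus, plus, opp in HN1; simpl in HN1.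
  apply Rabs_lt_between in HN1. lra. Qed.

Lemma my_le_epsilon x y : (forall e, 0 < e -> x <= y + e) -> x <= y.
Proof. intros H. destruct (Rle_or_lt x y); auto. specialize (H ((x - y)/2) ltac:(lra)). lra. Qed.

Definition cis (a : R) : C := (cos a, sin a).

Lemma cis_mult a b : (cis a * cis b)%C = cis (a + b).
Proof. unfold cis, Cmult; simpl. rewrite cos_plus, sin_plus. f_equal; ring. Qed.

Lemma cis_pow a n : Cpow (cis a) n = cis (INR n * a).
Proof. induction n. simpl. unfold cis. rewrite Rmult_0_l, cos_0, sin_0. reflexivity.
  rewrite Cpow_S, IHn, cis_mult. f_equal. rewrite S_INR. ring. Qed.

Lemma Cmod_cis a : Cmod (cis a) = 1.
Proof. unfold Cmod, cis; simpl. pose proof (sin2_cos2 a). unfold Rsqr in H.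
  replace (cos a * (cos a * 1) + sin a * (sin a * 1)) with 1 by lra. apply sqrt_1. Qed.

Definition omega (N : nat) : C := cis (2 * PI / INR N).

Lemma omega_N N : (1 <= N)%nat -> Cpow (omega N) N = 1%C.
Proof. intros H. unfold omega. rewrite cis_pow.
  replace (INR N * (2 * PI / INR N)) with (2 * PI). unfold cis.
  replace (2 * PI) with (0 + 2 * INR 1 * PI) by (simpl; ring). rewrite cos_period.
  rewrite sin_period. rewrite cos_0, sin_0. reflexivity.
  field. apply not_0_INR. lia. Qed.

Lemma cis_ne_1 t : 0 < t < 2 * PI -> cis t <> 1%C.
Proof. intros Ht E. unfold cis in E. injection E as Ec Es.
  destruct (sin_eq_0_0 t Es) as [k Hk]. subst t.
  assert (0 < IZR k < 2). { pose proof PI_RGT_0. split; nra. }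
  destruct H as [H1 H2]. apply lt_IZR in H1. apply lt_IZR in H2.
  assert (k = 1%Z) by lia. subst k. simpl in Ec. rewrite Rmult_1_l, cos_PI in Ec. lra. Qed.

Lemma omega_pow_ne_1 N s : (0 < s < N)%nat -> Cpow (omega N) s <> 1%C.
Proof. intros H. unfold omega. rewrite cis_pow. apply cis_ne_1.
  assert (0 < INR s) by (apply lt_0_INR; lia). assert (INR s < INR N) by (apply lt_INR; lia).
  pose proof PI_RGT_0. split.
  apply Rmult_lt_0_compat. auto. apply Rdiv_lt_0_compat; lra.
  replace (INR s * (2 * PI / INR N)) with (2 * PI * (INR s / INR N)) by (field; lra).
  rewrite <- (Rmult_1_r (2 * PI)) at 2. apply Rmult_lt_compat_l. lra.
  apply (Rmult_lt_reg_r (INR N)). lra. field_simplify; lra. Qed.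

Lemma geom_root N q : (1 <= N)%nat ->
  fsum (fun j => Cpow (Cpow (omega N) q) j) N = if Nat.eqb (q mod N) 0 then RtoC (INR N) else 0%C.
Proof. intros HN. pose proof (Nat.div_mod_eq q N) as Hd.
  set (t := (q / N)%nat) in *. set (s := (q mod N)%nat) in *.
  assert (Hs : (s < N)%nat) by (apply Nat.mod_upper_bound; lia).
  assert (Hz : Cpow (omega N) q = Cpow (omega N) s).
  { rewrite Hd, Cpow_add_r, Cpow_mult_r, omega_N, Cpow_1_l by auto. ring. }
  rewrite Hz. destruct (Nat.eqb_spec s 0) as [E|E].
  - rewrite E. simpl Cpow. rewrite (fsum_ext _ (fun _ => 1%C)). apply fsum_const.
    intros j. apply Cpow_1_l.
  - set (z := Cpow (omega N) s).
    assert (Hz1 : z <> 1%C) by (apply omega_pow_ne_1; lia).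
    assert (HzN : Cpow z N = 1%C).
    { unfold z. rewrite <- Cpow_mult_r, Nat.mul_comm, Cpow_mult_r, omega_N by auto. apply Cpow_1_l. }
    pose proof (fsum_geom z N) as G. rewrite HzN in G.
    replace (1 - 1)%C with (RtoC 0) in G by ring.
    assert (z - 1 <> 0)%C. { intros E'. apply Hz1. replace z with (z - 1 + 1)%C by ring. rewrite E'. ring. }
    replace (fsum (fun j => Cpow z j) N) with (fsum (fun j => Cpow z j) N * (z - 1) / (z - 1))%C by (field; auto).
    rewrite G. field. auto.
Qed.
Lemma fsum_scal a f N : fsum (fun j => (a * f j)%C) N = (a * fsum f N)%C.
Proof. induction N; simpl. ring. rewrite IHN. ring. Qed.

Lemma sum_n_delta (a : nat -> C) n k c : (k <= n)%nat ->
  (forall m, (m <= n)%nat -> a m = if Nat.eqb m k then c else RtoC 0) -> sum_n (a : nat -> C_NormedModule) n = c.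
Proof. intros Hk H. induction n.
  - assert (k = 0%nat) by lia. subst. rewrite sum_O. rewrite H; auto.
  - destruct (Nat.eq_dec k (S n)) as [E|E].
    + subst k. rewrite sum_Sn. rewrite sum_n_zero. rewrite H by lia. rewrite Nat.eqb_refl.
      apply (plus_zero_l (G:=C_NormedModule)).
      intros m Hm. rewrite H by lia. destruct (Nat.eqb_spec m (S n)). lia. auto.
    + rewrite sum_Sn. rewrite IHn by (auto; lia). rewrite (H (S n)) by lia.
      destruct (Nat.eqb_spec (S n) k). lia. apply (plus_zero_r (G:=C_NormedModule)).
Qed.

Lemma idx_fact M m k : (m <= M)%nat -> (k <= M)%nat ->
  Nat.eqb ((m + M * k) mod (S M)) 0 = Nat.eqb m k.
Proof. intros Hm Hk. destruct (Nat.eqb_spec m k) as [E|E].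
  - subst. replace (k + M * k)%nat with (k * S M)%nat by lia. rewrite Nat.Div0.mod_mul. reflexivity.
  - destruct (Nat.eqb_spec ((m + M * k) mod S M) 0) as [E2|E2]; auto. exfalso.
    pose proof (Nat.div_mod_eq (m + M * k) (S M)) as Hd. rewrite E2 in Hd.
    set (t := ((m + M * k) / S M)%nat) in *.
    assert (t <= k \/ k + 1 <= t)%nat as [Ht|Ht] by lia.
    + assert (S M * t <= S M * k)%nat by (apply Nat.mul_le_mono_l; auto).
      destruct (Nat.eq_dec t k). subst t. nia. 
      assert (t + 1 <= k)%nat by lia.
      assert (S M * (t + 1) <= S M * k)%nat by (apply Nat.mul_le_mono_l; auto). nia.
    + assert (S M * (k + 1) <= S M * t)%nat by (apply Nat.mul_le_mono_l; auto). nia.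
Qed.

Lemma cauchy_est (d : coef) r eps k : 0 < r -> abs_conv d r ->
  (forall z, Cmod z = r -> Cmod (val d z) <= eps) -> Cmod (d k) * r ^ k <= eps.
Proof. intros Hr Hc Hb. apply my_le_epsilon. intros e He.
  destruct (tail_small (fun m => Cmod (d m) * r ^ m) (fun n => abs_conv_nonneg d r n ltac:(lra)) Hc e He) as [N0 HN0].
  set (M := Nat.max N0 k). set (N := S M). set (w := omega N).
  set (z := fun j => (RtoC r * Cpow w j)%C).
  assert (Hz : forall j, Cmod (z j) = r).
  { intros j. unfold z. rewrite Cmod_mult, Cmod_pow, Cmod_R. unfold w, omega. rewrite Cmod_cis, pow1, Rabs_pos_eq; lra. }
  set (c0 := Cpow w (M * k)).
  set (W := fsum (fun j => (Cpow c0 j * val d (z j))%C) N).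
  set (U := fun m => (d m * RtoC (r ^ m) * (if Nat.eqb ((m + M * k) mod N) 0 then RtoC (INR N) else RtoC 0))%C).
  assert (HU : is_sum U W).
  { unfold W. eapply is_sum_ext. 2: apply (is_sum_fsum (fun j m => (Cpow c0 j * (d m * Cpow (z j) m))%C)).
    - intros m. cbv beta. unfold U. rewrite <- (geom_root N (m + M * k)) by (unfold N; lia).
      rewrite <- fsum_scal. apply fsum_ext. intros j. unfold z, c0.
      rewrite Cpow_mult_l, RtoC_pow, <- !Cpow_mult_r.
      replace ((m + M * k) * j)%nat with (j * m + M * k * j)%nat by ring.
      rewrite Cpow_add_r. fold w. ring.
    - intros j. apply is_sum_scal. apply val_eval_conv with r; auto. rewrite Hz. lra. }
  assert (HW : Cmod W <= INR N * eps).
  { unfold W. apply Cmod_fsum_le. intros j. rewrite Cmod_mult, Cmod_pow. unfold c0, w, omega.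
    rewrite Cmod_pow, Cmod_cis, !pow1, Rmult_1_l. apply Hb, Hz. }
  assert (Hsn : sum_n (U : nat -> C_NormedModule) (pred N) = (RtoC (INR N) * (d k * RtoC (r ^ k)))%C).
  { apply (sum_n_delta _ _ k). unfold N, M; simpl; lia.
    intros m Hm. unfold U. unfold N at 1. rewrite idx_fact by (unfold N, M in *; simpl in *; lia).
    destruct (Nat.eqb_spec m k). subst. ring. ring. }
  assert (Htail : is_sum (fun i => U (N + i)%nat) (W - RtoC (INR N) * (d k * RtoC (r ^ k)))%C).
  { unfold is_sum. apply (is_series_incr_n (K:=C_AbsRing) (V:=C_NormedModule)). unfold N; lia.
    rewrite Hsn. replace (plus _ _) with W. exact HU.
    unfold plus; simpl. ring. }
  assert (HT : Cmod (W - RtoC (INR N) * (d k * RtoC (r ^ k)))%C <= INR N * Series (fun i => Cmod (d (N + i)%nat) * r ^ (N + i)%nat)).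
  { eapply is_sum_bound. exact Htail.
    2: { rewrite Rmult_comm. apply is_series_scal_r. apply Series_correct.
         apply (ex_series_incr_n (K:=R_AbsRing) (V:=R_NormedModule) (fun m => Cmod (d m) * r ^ m)). exact Hc. }
    intros i. unfold U. rewrite !Cmod_mult, Cmod_R, Rabs_pos_eq by (apply pow_le; lra).
    destruct (Nat.eqb _ 0). rewrite Cmod_R, Rabs_pos_eq by apply pos_INR. lra.
    rewrite Cmod_0. pose proof (pos_INR N). pose proof (abs_conv_nonneg d r (N + i) ltac:(lra)). nra. }
  assert (HNk : (N0 <= N)%nat) by (unfold N, M; lia).
  specialize (HN0 N HNk).
  assert (Hd : INR N * (Cmod (d k) * r ^ k) <= INR N * eps + INR N * Series (fun i => Cmod (d (N + i)%nat) * r ^ (N + i)%nat)).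
  { replace (INR N * (Cmod (d k) * r ^ k)) with (Cmod (RtoC (INR N) * (d k * RtoC (r ^ k)))).
    2:{ rewrite !Cmod_mult, !Cmod_R, !Rabs_pos_eq; auto. apply pow_le; lra. apply pos_INR. }
    replace (RtoC (INR N) * (d k * RtoC (r ^ k)))%C with (W + - (W - RtoC (INR N) * (d k * RtoC (r ^ k))))%C by ring.
    eapply Rle_trans. apply Cmod_triangle. rewrite Cmod_opp. lra. }
  assert (0 < INR N) by (apply lt_0_INR; unfold N; lia).
  apply (Rmult_le_reg_l (INR N)); auto. nra.
Qed.
Lemma in_A_conv f r : in_A f -> 0 <= r < 1 -> abs_conv f r.
Proof. intros Hf Hr. apply Hf; auto. Qed.

Definition cdiff (h h' : coef) : coef := fun k => (h k - h' k)%C.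

Lemma abs_conv_diff h h' r : abs_conv h r -> abs_conv h' r -> 0 <= r -> abs_conv (cdiff h h') r.
Proof. intros H1 H2 Hr. apply (ex_series_R_le _ (fun k => Cmod (h k) * r ^ k + Cmod (h' k) * r ^ k)).
  - intros k. split. apply abs_conv_nonneg; auto. unfold cdiff.
    assert (0 <= r ^ k) by (apply pow_le; auto).
    assert (Cmod (h k - h' k) <= Cmod (h k) + Cmod (h' k)).
    { unfold Cminus. eapply Rle_trans. apply Cmod_triangle. rewrite Cmod_opp. lra. }
    nra.
  - apply (ex_series_plus (K:=R_AbsRing) (V:=R_NormedModule)); auto.
Qed.

Lemma eval_diff h h' z u v : eval h z u -> eval h' z v -> eval (cdiff h h') z (u - v)%C.
Proof. intros H1 H2. eapply is_sum_ext. 2: apply (is_sum_minus _ _ _ _ H1 H2).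
  intros n; unfold cdiff; simpl; ring. Qed.

Lemma lu_near_coef h h' r eps : in_A h -> in_A h' -> 0 < r < 1 -> lu_near h r eps h' ->
  forall k, Cmod (h k - h' k) * r ^ k <= eps.
Proof. intros Hh Hh' Hr Hn k.
  assert (Hc : abs_conv (cdiff h h') r) by (apply abs_conv_diff; try apply in_A_conv; auto; lra).
  apply (cauchy_est (cdiff h h') r eps k); auto. lra.
  intros z Hz.
  destruct (eval_ex h r z (in_A_conv h r Hh ltac:(lra)) ltac:(lra)) as [u Hu].
  destruct (eval_ex h' r z (in_A_conv h' r Hh' ltac:(lra)) ltac:(lra)) as [v Hv].
  rewrite (eval_val _ _ _ (eval_diff _ _ _ _ _ Hu Hv)).
  apply Rlt_le. apply (Hn z u v); auto. lra. Qed.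

Definition lam (g h : coef) : C := val (hadamard h g) 1%C.

Lemma lam_eval g h : in_A h -> in_Abar g -> eval (hadamard h g) 1%C (lam g h).
Proof. intros Hh Hg. destruct (had_conv h g Hh Hg) as [rho [Hrho Hc]].
  apply val_eval_conv with rho; auto. rewrite Cmod_1; lra. Qed.

Lemma lam_cont_coef g R0 h h' eps : 1 < R0 -> ex_series (fun k => Cmod (g k) * R0 ^ k) ->
  in_A h -> in_A h' -> (forall k, Cmod (h k - h' k) * (/ R0) ^ k <= eps) ->
  Cmod (lam g h - lam g h') <= eps * Series (fun k => Cmod (g k) * R0 ^ k).
Proof. intros HR Hg Hh Hh' Hk.
  assert (Hgb : in_Abar g) by (exists R0; auto).
  pose proof (eval_diff _ _ _ _ _ (lam_eval g h Hh Hgb) (lam_eval g h' Hh' Hgb)) as D.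
  eapply is_sum_bound. exact D.
  2:{ apply (is_series_scal (K:=R_AbsRing) (V:=R_NormedModule) eps). apply Series_correct. exact Hg. }
  intros n. unfold cdiff, hadamard. rewrite Cpow_1_l, Cmod_mult, Cmod_1, Rmult_1_r.
  replace (h n * g n - h' n * g n)%C with ((h n - h' n) * g n)%C by ring.
  rewrite Cmod_mult. change (scal eps (Cmod (g n) * R0 ^ n)) with (eps * (Cmod (g n) * R0 ^ n)).
  specialize (Hk n). rewrite pow_inv in Hk.
  assert (0 < R0 ^ n) by (apply pow_lt; lra).
  assert (Cmod (h n - h' n) <= eps * R0 ^ n).
  { apply (Rmult_le_reg_r (/ R0 ^ n)). apply Rinv_0_lt_compat; auto.
    replace (eps * R0 ^ n * / R0 ^ n) with eps by (field; lra). auto. }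
  pose proof (Cmod_ge_0 (g n)). nra.
Qed.

Definition Uball (h0 : coef) (r eps : R) (h : coef) : Prop :=
  exists eps', eps' < eps /\ lu_near h0 r eps' h.

Lemma Uball_open h0 r eps : in_A h0 -> 0 <= r < 1 -> lu_open (Uball h0 r eps).
Proof. intros H0 Hr h Hh [eps' [He Hn]]. exists r, ((eps - eps') / 2). split; auto. split. lra.
  intros g Hg Hng. exists (eps' + (eps - eps') / 2). split. lra.
  intros z u v Hz Hu Hv.
  destruct (eval_ex h r z (in_A_conv h r Hh Hr) Hz) as [t Ht].
  specialize (Hn z u t Hz Hu Ht). specialize (Hng z t v Hz Ht Hv).
  replace (u - v)%C with ((u - t) + (t - v))%C by ring.
  eapply Rle_lt_trans. apply Cmod_triangle. lra. Qed.

Lemma lu_near_refl h r eps : 0 < eps -> lu_near h r eps h.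
Proof. intros He z u v _ Hu Hv. rewrite (is_sum_unique _ _ _ Hu Hv). replace (v - v)%C with (RtoC 0) by ring.
  rewrite Cmod_0. auto. Qed.

Lemma Uball_center h r eps : 0 < eps -> Uball h r eps h.
Proof. intros. exists (eps / 2). split. lra. apply lu_near_refl. lra. Qed.

Lemma lu_near_mono h r eps eps' h' : eps <= eps' -> lu_near h r eps h' -> lu_near h r eps' h'.
Proof. intros He Hn z u v Hz Hu Hv. specialize (Hn z u v Hz Hu Hv). lra. Qed.

Fixpoint list_max {I : Type} (F : I -> nat) (l : list I) : nat :=
  match l with nil => 0%nat | cons i l' => Nat.max (F i) (list_max F l') end.

Lemma list_max_In {I : Type} (F : I -> nat) l i : In i l -> (F i <= list_max F l)%nat.
Proof. induction l; simpl. tauto. intros [E|E]. subst; lia. specialize (IHl E). lia. Qed.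

Lemma cluster (V : coef -> Prop) (Hc : lu_compact V) (hs : nat -> coef) :
  (forall n, V (hs n)) ->
  exists h, V h /\ forall r eps N, 0 <= r < 1 -> 0 < eps -> exists n, (N <= n)%nat /\ lu_near h r eps (hs n).
Proof. intros Hs. apply NNPP. intros Hno.
  assert (Hall : forall h, V h -> exists r eps N, (0 <= r < 1 /\ 0 < eps) /\
     forall n, (N <= n)%nat -> ~ lu_near h r eps (hs n)).
  { intros h Hh. apply NNPP. intros Hn. apply Hno. exists h. split; auto.
    intros r eps N Hr He. apply NNPP. intros Hn2. apply Hn. exists r, eps, N. split; auto.
    intros n Hn3 Hl. apply Hn2. exists n; auto. }
  destruct Hc as [HA Hcov].
  set (I := { p : coef * R * R * nat | match p with (h, r, eps, N) => V h /\ (0 <= r < 1 /\ 0 < eps) /\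
        forall n, (N <= n)%nat -> ~ lu_near h r eps (hs n) end }).
  set (U := fun (i : I) => match proj1_sig i with (h, r, eps, N) => Uball h r eps end).
  destruct (Hcov I U) as [l Hl].
  - intros [p Hp]. unfold U; simpl. destruct p as [[[h r] eps] N]. destruct Hp as [Hh [Hre _]].
    apply Uball_open; auto. tauto.
  - intros f Hf. destruct (Hall f Hf) as [r [eps [N [Hre Hn]]]].
    exists (exist _ (f, r, eps, N) (conj Hf (conj Hre Hn))). unfold U; simpl. apply Uball_center. tauto.
  - set (Nm := list_max (fun i : I => match proj1_sig i with (h, r, eps, N) => N end) l).
    destruct (Hl (hs Nm) (Hs Nm)) as [i [Hi HU]].
    pose proof (list_max_In (fun i : I => match proj1_sig i with (h, r, eps, N) => N end) l i Hi) as HM.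
    fold Nm in HM. unfold U in HU. destruct i as [p Hp]. simpl in *. destruct p as [[[h r] eps] N].
    destruct Hp as [Hh [Hre Hn]]. simpl in *.
    destruct HU as [eps' [He' Hnear]]. apply (Hn Nm HM). eapply lu_near_mono; [|exact Hnear]. lra.
Qed.
Lemma lam_cont g h eta : in_Abar g -> in_A h -> 0 < eta ->
  exists r eps, (0 <= r < 1 /\ 0 < eps) /\ forall h', in_A h' -> lu_near h r eps h' -> Cmod (lam g h - lam g h') < eta.
Proof. intros [R0 [HR0 Hg]] Hh He.
  set (S := Series (fun k => Cmod (g k) * R0 ^ k)).
  assert (HS : 0 <= S) by (apply Series_nonneg; auto; intros; apply abs_conv_nonneg; lra).
  assert (Hr : 0 < / R0 < 1). { split. apply Rinv_0_lt_compat; lra. rewrite <- Rinv_1. apply Rinv_lt_contravar; lra. }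
  exists (/ R0), (eta / (2 * (S + 1))). split. { split. lra. apply Rdiv_lt_0_compat; lra. }
  intros h' Hh' Hn.
  pose proof (lu_near_coef h h' (/ R0) _ Hh Hh' Hr Hn) as Hk.
  eapply Rle_lt_trans. apply (lam_cont_coef g R0 h h' _ HR0 Hg Hh Hh' Hk). fold S.
  apply (Rmult_lt_reg_r (2 * (S + 1))). lra.
  replace (eta / (2 * (S + 1)) * S * (2 * (S + 1))) with (eta * S) by (field; lra). nra.
Qed.

Lemma archi_inv d : 0 < d -> exists n : nat, / (INR n + 1) < d.
Proof. intros Hd. destruct (archimed (/ d)) as [H1 _].
  assert (0 <= IZR (up (/ d))). { assert (0 < / d) by (apply Rinv_0_lt_compat; auto). lra. }
  exists (Z.to_nat (up (/ d))). rewrite INR_IZR_INZ, Z2Nat.id by (apply le_IZR; auto).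
  assert (0 < / d) by (apply Rinv_0_lt_compat; auto).
  replace d with (/ / d) at 2 by (field; lra). apply Rinv_lt_contravar. nra. lra. Qed.

Lemma lam_closed V g w : lu_compact V -> in_Abar g -> (forall f, V f -> lam g f <> w) ->
  exists d, 0 < d /\ forall f, V f -> d <= Cmod (lam g f - w).
Proof. intros [HA Hcov] Hg Hne.
  set (U := fun (n : nat) (h : coef) => in_A h /\ / (INR n + 1) < Cmod (lam g h - w)).
  destruct (Hcov nat U) as [l Hl].
  - intros n h Hh [_ Hu].
    set (eta := Cmod (lam g h - w) - / (INR n + 1)).
    destruct (lam_cont g h eta Hg Hh ltac:(unfold eta; lra)) as [r [eps [Hre Hc]]].
    exists r, eps. split. tauto. split. tauto. intros h' Hh' Hn. split; auto.
    specialize (Hc h' Hh' Hn).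
    pose proof (Cmod_triangle (lam g h - lam g h') (lam g h' - w)) as Ht.
    replace ((lam g h - lam g h') + (lam g h' - w))%C with (lam g h - w)%C in Ht by ring.
    unfold eta in Hc. lra.
  - intros f Hf. assert (0 < Cmod (lam g f - w)).
    { apply Cmod_gt_0. intros E. apply (Hne f Hf). replace (lam g f) with (lam g f - w + w)%C by ring. rewrite E. ring. }
    destruct (archi_inv _ H) as [n Hn]. exists n. split; auto.
  - exists (/ (INR (list_max (fun n => n) l) + 1)). split.
    apply Rinv_0_lt_compat. pose proof (pos_INR (list_max (fun n => n) l)). lra.
    intros f Hf. destruct (Hl f Hf) as [n [Hin [_ Hn]]].
    pose proof (list_max_In (fun n => n) l n Hin) as Hm. simpl in Hm.
    apply le_INR in Hm. pose proof (pos_INR n).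
    eapply Rle_trans. 2: apply Rlt_le, Hn. apply Rinv_le_contravar; lra.
Qed.

Lemma is_sum_first (u : nat -> C) : (forall k, (1 <= k)%nat -> u k = RtoC 0) -> is_sum u (u 0%nat).
Proof. intros H. unfold is_sum. apply (is_series_decr_1 (K:=C_AbsRing) (V:=C_NormedModule)).
  replace (plus _ _) with (RtoC 0).
  apply is_sum_zero. intros; apply H; lia.
  unfold plus, opp; simpl. ring. Qed.

Lemma Cpow_0_S k : Cpow (RtoC 0) (S k) = RtoC 0.
Proof. simpl. ring. Qed.

Lemma eval_at_0 c : eval c (RtoC 0) (c 0%nat).
Proof. unfold eval. pose proof (is_sum_first (fun k => (c k * Cpow (RtoC 0) k)%C)) as H.
  simpl in H. replace (c 0%nat * 1)%C with (c 0%nat) in H by ring. apply H.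
  intros k Hk. destruct k. lia. rewrite Cpow_0_S. ring. Qed.

Lemma eval_Pmap f g x w : eval (hadamard f g) x w -> eval (hadamard f (Pmap x g)) 1%C w.
Proof. intros H. eapply is_sum_ext. 2: exact H. intros k. unfold hadamard, Pmap. simpl.
  rewrite Cpow_1_l. ring. Qed.

Lemma eval_Pmap_inv f g x w : eval (hadamard (Pmap x f) g) 1%C w -> eval (hadamard f g) x w.
Proof. intros H. eapply is_sum_ext. 2: exact H. intros k. unfold hadamard, Pmap. simpl.
  rewrite Cpow_1_l. ring. Qed.

Lemma eval_Pmap_l f g x w : eval (hadamard f g) x w -> eval (hadamard (Pmap x f) g) 1%C w.
Proof. intros H. eapply is_sum_ext. 2: exact H. intros k. unfold hadamard, Pmap. simpl.
  rewrite Cpow_1_l. ring. Qed.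

Lemma Pmap_Pmap x y h : Pmap x (Pmap y h) = Pmap (y * x)%C h.
Proof. apply functional_extensionality. intros k. unfold Pmap. rewrite Cpow_mult_l. ring. Qed.

Lemma Pmap_0 (h : coef) : h 0%nat = 1%C -> Pmap (RtoC 0) h = e_one.
Proof. intros H. apply functional_extensionality. intros k. unfold Pmap, e_one. destruct k.
  simpl. rewrite H. ring. rewrite Cpow_0_S. ring. Qed.

Lemma Pmap_1 h : Pmap 1%C h = h.
Proof. apply functional_extensionality. intros k. unfold Pmap. rewrite Cpow_1_l. ring. Qed.

Lemma ex_series_R_ext (a b : nat -> R) : (forall n, a n = b n) -> ex_series a -> ex_series b.
Proof. intros. eapply (ex_series_ext (K:=R_AbsRing) (V:=R_NormedModule)); eauto. Qed.

Definition gc (g : coef) (c : C) : coef := fun k => ((g k - c * e_one k) / (g 0%nat - c))%C.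

Lemma gc_Abar0 g c : in_Abar g -> g 0%nat <> c -> in_Abar0 (gc g c).
Proof. intros [R0 [HR0 Hg]] Hc. assert (Hgc : (g 0%nat - c)%C <> RtoC 0).
  { intros E. apply Hc. replace (g 0%nat) with (g 0%nat - c + c)%C by ring. rewrite E. ring. }
  split.
  - exists R0. split; auto. unfold abs_conv.
    apply (ex_series_incr_1 (K:=R_AbsRing) (V:=R_NormedModule)).
    apply (ex_series_incr_1 (K:=R_AbsRing) (V:=R_NormedModule)) in Hg.
    apply (ex_series_R_ext (fun k => (/ Cmod (g 0%nat - c)%C) * (Cmod (g (S k)) * R0 ^ (S k)))).
    intros k. unfold gc, e_one. replace (g (S k) - c * 0)%C with (g (S k)) by ring.
    unfold Cdiv. rewrite Cmod_mult, Cmod_inv by auto. ring.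
    apply (ex_series_scal_l (K:=R_AbsRing) (V:=R_NormedModule)). exact Hg.
  - unfold gc, e_one. field. auto.
Qed.

Lemma eval_e_part f z : eval (hadamard f e_one) z (f 0%nat).
Proof. unfold eval. pose proof (is_sum_first (fun k => (hadamard f e_one k * Cpow z k)%C)) as H.
  assert (E : (hadamard f e_one 0%nat * Cpow z 0)%C = f 0%nat) by (unfold hadamard, e_one; simpl; ring).
  cbv beta in H. rewrite E in H. apply H. intros k Hk. destruct k. lia. unfold hadamard, e_one. ring. Qed.

Lemma eval_gc f g c z w : g 0%nat <> c -> eval (hadamard f g) z w ->
  eval (hadamard f (gc g c)) z ((w - c * f 0%nat) / (g 0%nat - c))%C.
Proof. intros Hc H. assert (Hgc : (g 0%nat - c)%C <> RtoC 0).
  { intros E. apply Hc. replace (g 0%nat) with (g 0%nat - c + c)%C by ring. rewrite E. ring. }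
  pose proof (is_sum_scal (c) _ _ (eval_e_part f z)) as E1.
  pose proof (is_sum_minus _ _ _ _ H E1) as E2.
  pose proof (is_sum_scal (/ (g 0%nat - c)) _ _ E2) as E3.
  eapply is_sum_ext. 2: { replace ((w - c * f 0%nat) / (g 0%nat - c))%C with (/ (g 0%nat - c) * (w - c * f 0%nat))%C by (field; auto). exact E3. }
  intros k. unfold hadamard, gc. field. auto. Qed.
Lemma core V g f z w : (forall f, V f -> in_A0 f) -> complete (dualT V) -> in_Abar g -> V f ->
  Cmod z <= 1 -> eval (hadamard f g) z w -> w <> g 0%nat -> lam_image V g w.
Proof. intros HV0 HT Hg Hf Hz Hw Hw0. apply NNPP. intros Hn.
  assert (Hd : dualT V (gc g w)).
  { split. apply gc_Abar0; auto.
    intros h Hh u Hu Hu0. apply Hn. exists h. split; auto.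
    destruct (HV0 h Hh) as [HhA Hh0].
    pose proof (eval_gc h g w 1%C (lam g h) (fun E => Hw0 (eq_sym E)) (lam_eval g h HhA Hg)) as E.
    pose proof (is_sum_unique _ _ _ Hu E) as E2. rewrite Hh0 in E2.
    assert (Hgw : (g 0%nat - w)%C <> RtoC 0).
    { intros E3. apply Hw0. replace (g 0%nat) with (g 0%nat - w + w)%C by ring. rewrite E3. ring. }
    assert (lam g h = w).
    { assert (E4 : ((lam g h - w * 1) / (g 0%nat - w))%C = RtoC 0) by (rewrite <- E2; auto).
      replace (lam g h) with ((lam g h - w * 1) / (g 0%nat - w) * (g 0%nat - w) + w)%C by (field; auto).
      rewrite E4. ring. }
    rewrite <- H. apply lam_eval; auto. }
  destruct (HT _ z Hd Hz) as [_ Hd2].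
  destruct (HV0 f Hf) as [HfA Hf0].
  apply (Hd2 f Hf ((w - w * f 0%nat) / (g 0%nat - w))%C).
  apply eval_Pmap. apply eval_gc; auto.
  rewrite Hf0. assert (Hgw : (g 0%nat - w)%C <> RtoC 0).
  { intros E3. apply Hw0. replace (g 0%nat) with (g 0%nat - w + w)%C by ring. rewrite E3. ring. }
  field. auto.
Qed.

Lemma lam_unique V g w f : V f -> eval (hadamard f g) 1%C w -> (forall f, V f -> in_A0 f) -> in_Abar g -> lam g f = w.
Proof. intros Hf Hw HV0 Hg. apply eval_val. exact Hw. Qed.

Lemma core0 V g f : (forall f, V f -> in_A0 f) -> lu_compact V -> complete (dualT V) -> in_Abar g -> V f ->
  lam_image V g (g 0%nat).
Proof. intros HV0 Hc HT Hg Hf. apply NNPP. intros Hn.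
  destruct (lam_closed V g (g 0%nat) Hc Hg) as [d [Hd Hd2]].
  { intros h Hh E. apply Hn. exists h. split; auto. rewrite <- E. apply lam_eval; auto. apply HV0; auto. }
  destruct (HV0 f Hf) as [HfA Hf0].
  destruct (had_conv f g HfA Hg) as [rho [Hrho Hconv]].
  set (phi := val (hadamard f g)).
  set (L := Series (fun k => Cmod (hadamard f g k) * rho ^ k) / (rho - 1)).
  assert (HL : 0 <= L). { unfold L. apply Rle_mult_inv_pos. apply Series_nonneg; auto.
    intros; apply abs_conv_nonneg; lra. lra. }
  destruct (archi_inv (d / (L + 1))) as [n Hn1]. apply Rdiv_lt_0_compat; lra.
  set (N := S n).
  assert (HN : 0 < INR N) by (apply lt_0_INR; unfold N; lia).
  assert (HN' : INR N = INR n + 1) by (unfold N; rewrite S_INR; auto).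
  assert (HLN : L / INR N < d).
  { rewrite HN'. apply (Rmult_lt_reg_r (/ (L+1))). apply Rinv_0_lt_compat; lra.
    apply Rle_lt_trans with (/ (INR n + 1)). 
    replace (L / (INR n + 1) * / (L + 1)) with (/ (INR n + 1) * (L / (L + 1))) by (field; lra).
    rewrite <- (Rmult_1_r (/ (INR n + 1))) at 2. apply Rmult_le_compat_l. rewrite <- HN'. left; apply Rinv_0_lt_compat; auto.
    apply (Rmult_le_reg_r (L + 1)). lra. field_simplify; lra. exact Hn1. }
  set (t := fun j : nat => RtoC (INR j / INR N)).
  assert (Ht : forall j, (j <= N)%nat -> Cmod (t j) <= 1).
  { intros j Hj. unfold t. rewrite Cmod_R, Rabs_pos_eq. apply (Rmult_le_reg_r (INR N)); auto.
    replace (INR j / INR N * INR N) with (INR j) by (field; lra). rewrite Rmult_1_l. apply le_INR; auto. apply Rle_mult_inv_pos. apply pos_INR. auto. }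
  assert (Hev : forall j, (j <= N)%nat -> eval (hadamard f g) (t j) (phi (t j))).
  { intros j Hj. apply val_eval_conv with rho; auto. specialize (Ht j Hj). lra. }
  assert (Hstep : forall j, (S j <= N)%nat -> Cmod (phi (t (S j)) - phi (t j)) < d).
  { intros j Hj. eapply Rle_lt_trans. apply (val_lip _ rho 1 _ _ Hconv ltac:(lra) (Ht (S j) Hj) (Ht j ltac:(lia))).
    fold L. unfold t. rewrite <- RtoC_minus, Cmod_R. rewrite S_INR.
    replace ((INR j + 1) / INR N - INR j / INR N) with (/ INR N) by (field; lra).
    rewrite Rabs_pos_eq. exact HLN. left; apply Rinv_0_lt_compat; auto. }
  assert (Hclaim : forall j, (j <= N)%nat -> phi (t j) = g 0%nat \/
     exists c x, c <> g 0%nat /\ Cmod (c - g 0%nat) < d /\ Cmod x <= 1 /\ eval (hadamard f g) x c).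
  { induction j; intros Hj.
    - left. unfold phi, t. cbv beta. replace (INR 0 / INR N) with 0 by (simpl; unfold Rdiv; ring).
      rewrite (eval_val _ _ _ (eval_at_0 _)). unfold hadamard. rewrite Hf0. ring.
    - destruct (IHj ltac:(lia)) as [E|E]; [|right; exact E].
      destruct (Ceq_dec (phi (t (S j))) (g 0%nat)) as [E2|E2]. left; auto.
      right. exists (phi (t (S j))), (t (S j)). split; auto. split. rewrite <- E. apply Hstep; auto.
      split. apply Ht; auto. apply Hev; auto. }
  destruct (Hclaim N (le_n N)) as [E|[c [x [Hc0 [Hcd [Hx Hcx]]]]]].
  - assert (E1 : t N = 1%C) by (unfold t; f_equal; field; lra).
    rewrite E1 in E. unfold phi in E. change (val (hadamard f g) 1%C) with (lam g f) in E. specialize (Hd2 f Hf). rewrite E in Hd2.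
    replace (g 0%nat - g 0%nat)%C with (RtoC 0) in Hd2 by ring. rewrite Cmod_0 in Hd2. lra.
  - destruct (core V g f x c HV0 HT Hg Hf Hx Hcx Hc0) as [h [Hh Hhc]].
    specialize (Hd2 h Hh). unfold lam in Hd2. rewrite (eval_val _ _ _ Hhc) in Hd2. lra.
Qed.
Fixpoint subseq_build (next : nat -> nat -> nat) (j : nat) : nat :=
  match j with O => next O O | S j' => next (S (subseq_build next j')) (S j') end.

Lemma subseq_extract (u : nat -> R) l : ValAdh u l ->
  exists phi : nat -> nat, (forall j, (phi j < phi (S j))%nat) /\ (forall j, Rabs (u (phi j) - l) < / (INR j + 1)).
Proof. intros Hv.
  assert (Hex : forall N j, exists p, (N <= p)%nat /\ Rabs (u p - l) < / (INR j + 1)).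
  { intros N j. assert (Hp : 0 < / (INR j + 1)) by (apply Rinv_0_lt_compat; pose proof (pos_INR j); lra).
    destruct (Hv (disc l (mkposreal _ Hp)) N) as [p [Hp1 Hp2]].
    exists (mkposreal _ Hp). intros y Hy. exact Hy.
    exists p. split; auto. }
  set (next := fun N j => epsilon (inhabits 0%nat) (fun p => (N <= p)%nat /\ Rabs (u p - l) < / (INR j + 1))).
  assert (Hnext : forall N j, (N <= next N j)%nat /\ Rabs (u (next N j) - l) < / (INR j + 1)).
  { intros N j. unfold next. apply (epsilon_spec (inhabits 0%nat) (fun p => (N <= p)%nat /\ Rabs (u p - l) < / (INR j + 1))). apply Hex. }
  exists (subseq_build next). split.
  - intros j. simpl. destruct (Hnext (S (subseq_build next j)) (S j)). lia.
  - intros j. destruct j; simpl; apply Hnext.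
Qed.

Lemma incr_ge (phi : nat -> nat) : (forall j, (phi j < phi (S j))%nat) -> forall j, (j <= phi j)%nat.
Proof. intros H j. induction j. lia. specialize (H j). lia. Qed.

Lemma incr_mono (phi : nat -> nat) : (forall j, (phi j < phi (S j))%nat) -> forall i j, (i < j)%nat -> (phi i < phi j)%nat.
Proof. intros H i j Hij. induction j. lia. destruct (Nat.eq_dec i j). subst. apply H.
  specialize (IHj ltac:(lia)). specialize (H j). lia. Qed.

Lemma Cmod_le_re_im (z : C) : Cmod z <= Rabs (Re z) + Rabs (Im z).
Proof. destruct z as [a b]. unfold Cmod, Re, Im; simpl.
  rewrite <- (sqrt_square (Rabs a + Rabs b)).
  apply sqrt_le_1_alt. pose proof (Rabs_pos a). pose proof (Rabs_pos b).
  assert (a * (a * 1) = Rabs a * Rabs a). { rewrite <- Rabs_mult. rewrite Rabs_pos_eq. ring. nra. }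
  assert (b * (b * 1) = Rabs b * Rabs b). { rewrite <- Rabs_mult. rewrite Rabs_pos_eq. ring. nra. }
  nra. pose proof (Rabs_pos a). pose proof (Rabs_pos b). lra. Qed.

Lemma BW_C (y : nat -> C) : (forall n, Cmod (y n) <= 1) ->
  exists (phi : nat -> nat) ys, (forall j, (phi j < phi (S j))%nat) /\
    forall j, Cmod (y (phi j) - ys) < 2 / (INR j + 1).
Proof. intros Hy.
  assert (Hre : forall n, -1 <= Re (y n) <= 1).
  { intros n. pose proof (re_le_Cmod (y n)). specialize (Hy n). apply Rabs_le_between. lra. }
  assert (Him : forall n, -1 <= Im (y n) <= 1).
  { intros n. pose proof (Rmax_Cmod (y n)). pose proof (Rmax_r (Rabs (fst (y n))) (Rabs (snd (y n)))).
    specialize (Hy n). apply Rabs_le_between. unfold Im. lra. }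
  destruct (Bolzano_Weierstrass (fun n => Re (y n)) _ (compact_P3 (-1) 1) Hre) as [l1 Hl1].
  destruct (subseq_extract _ _ Hl1) as [phi1 [Hp1 Hc1]].
  destruct (Bolzano_Weierstrass (fun n => Im (y (phi1 n))) _ (compact_P3 (-1) 1) (fun n => Him (phi1 n))) as [l2 Hl2].
  destruct (subseq_extract _ _ Hl2) as [phi2 [Hp2 Hc2]].
  exists (fun j => phi1 (phi2 j)), (l1, l2). split.
  - intros j. apply incr_mono; auto.
  - intros j. eapply Rle_lt_trans. apply Cmod_le_re_im.
    specialize (Hc2 j). specialize (Hc1 (phi2 j)). simpl in *.
    assert (/ (INR (phi2 j) + 1) <= / (INR j + 1)).
    { apply Rinv_le_contravar. pose proof (pos_INR j); lra. apply Rplus_le_compat_r, le_INR, incr_ge; auto. }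
    replace (2 / (INR j + 1)) with (/ (INR j + 1) + / (INR j + 1)) by (field; pose proof (pos_INR j); lra).
    unfold Re, Im in *. simpl. unfold Rminus in *. lra.
Qed.
Lemma pow_diff1 (y y' : C) k : Cmod y <= 1 -> Cmod y' <= 1 -> Cmod (Cpow y k - Cpow y' k) <= INR k * Cmod (y - y').
Proof. intros Hy Hy'. destruct k.
  - replace (Cpow y 0 - Cpow y' 0)%C with (RtoC 0) by (simpl; ring). rewrite Cmod_0. simpl; lra.
  - eapply Rle_trans. apply (pow_diff_bound y y' 1 k); auto. rewrite pow1. lra. Qed.

Lemma Cmod_pow_le1 y k : Cmod y <= 1 -> Cmod (Cpow y k) <= 1.
Proof. intros H. rewrite Cmod_pow. rewrite <- (pow1 k). apply pow_incr. split; auto. apply Cmod_ge_0. Qed.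

Lemma Cmod_small_0 z : (forall e, 0 < e -> Cmod z <= e) -> z = RtoC 0.
Proof. intros H. apply Cmod_eq_0. apply Rle_antisym. apply my_le_epsilon. intros e He.
  specialize (H e He). lra. apply Cmod_ge_0. Qed.

Definition Srep V f (m : R) := exists h y, V h /\ Cmod y <= 1 /\ f = Pmap y h /\ m = Cmod y.

Lemma border_exists V f : (forall f, V f -> in_A0 f) -> lu_compact V -> V f ->
  exists h x, V h /\ Cmod x <= 1 /\ f = Pmap x h /\
    forall h' y, V h' -> Cmod y <= 1 -> f = Pmap y h' -> Cmod x <= Cmod y.
Proof.
  intros HV0 Hc Hf.
  set (E := fun x => Srep V f (- x)).
  destruct (completeness E) as [M [HM1 HM2]].
  { exists 0. intros x [h [y [_ [_ [_ Hx]]]]]. pose proof (Cmod_ge_0 y). lra. }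
  { exists (-1). exists f, 1%C. split; auto. split. rewrite Cmod_1; lra. split. rewrite Pmap_1; auto. rewrite Cmod_1. ring. }
  set (m := - M).
  assert (Hlow : forall h y, V h -> Cmod y <= 1 -> f = Pmap y h -> m <= Cmod y).
  { intros h y Hh Hy E'. unfold m. assert (HE : E (- Cmod y)). { exists h, y. repeat split; auto. ring. }
    specialize (HM1 _ HE). lra. }
  set (P := fun (n : nat) (p : coef * C) => V (fst p) /\ Cmod (snd p) <= 1 /\ f = Pmap (snd p) (fst p) /\ Cmod (snd p) < m + / (INR n + 1)).
  assert (Happ : forall n : nat, exists p, P n p).
  { intros n. apply NNPP. intros Hn.
    assert (HU : is_upper_bound E (M - / (INR n + 1))).
    { intros x [h [y [Hh [Hy [Ef Ex]]]]]. apply Rnot_lt_le. intros Hlt. apply Hn. exists (h, y).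
      unfold P; simpl. repeat split; auto. unfold m. lra. }
    specialize (HM2 _ HU). pose proof (pos_INR n). assert (0 < / (INR n + 1)) by (apply Rinv_0_lt_compat; lra). lra. }
  set (p := fun n => epsilon (@inhabits (coef * C) (f, RtoC 1)) (P n)).
  assert (Hp : forall n, P n (p n)).
  { intros n. unfold p. apply (epsilon_spec (@inhabits (coef * C) (f, RtoC 1)) (P n)). apply Happ. }
  destruct (BW_C (fun n => snd (p n)) (fun n => proj1 (proj2 (Hp n)))) as [phi [ys [Hphi Hys]]].
  destruct (cluster V Hc (fun j => fst (p (phi j))) (fun j => proj1 (Hp (phi j)))) as [hs [Hhs Hcl]].
  assert (Hm1 : m <= 1). { pose proof (Hlow f 1%C Hf ltac:(rewrite Cmod_1; lra) (eq_sym (Pmap_1 f))). rewrite Cmod_1 in H. auto. }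
  assert (Hysm : Cmod ys <= m).
  { apply my_le_epsilon. intros e He.
    destruct (archi_inv (e/3)) as [J HJ]. lra.
    specialize (Hys J). destruct (Hp (phi J)) as [_ [_ [_ Hlt]]].
    assert (/ (INR (phi J) + 1) <= / (INR J + 1)) by (apply Rinv_le_contravar; [pose proof (pos_INR J); lra | apply Rplus_le_compat_r, le_INR, incr_ge; auto]).
    pose proof (Cmod_triangle (snd (p (phi J))) (ys - snd (p (phi J)))) as Ht.
    replace (snd (p (phi J)) + (ys - snd (p (phi J))))%C with ys in Ht by ring.
    replace (ys - snd (p (phi J)))%C with (- (snd (p (phi J)) - ys))%C in Ht by ring. rewrite Cmod_opp in Ht.
    replace (2 / (INR J + 1)) with (2 * / (INR J + 1)) in Hys by (unfold Rdiv; ring).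
    lra. }
  assert (HfE : f = Pmap ys hs).
  { destruct (HV0 hs Hhs) as [HhsA _].
    apply functional_extensionality. intros k. unfold Pmap.
    replace (f k) with (f k - hs k * Cpow ys k + hs k * Cpow ys k)%C by ring.
    rewrite (Cmod_small_0 (f k - hs k * Cpow ys k)%C). ring.
    intros e He.
    assert (H2k : 0 < (/ 2) ^ k) by (apply pow_lt; lra).
    set (eps' := e / 2 * (/ 2) ^ k).
    set (del := e / (2 * (Cmod (hs k) * INR k + 1))).
    assert (Hdel : 0 < del). { unfold del. apply Rdiv_lt_0_compat. lra. pose proof (Cmod_ge_0 (hs k)). pose proof (pos_INR k). nra. }
    destruct (archi_inv (del / 2)) as [J HJ]. lra.
    destruct (Hcl (/ 2) eps' J ltac:(lra) ltac:(unfold eps'; nra)) as [j [Hj Hnear]].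
    destruct (Hp (phi j)) as [HV [Hy1 [Ef _]]].
    destruct (HV0 _ HV) as [HhA _].
    pose proof (lu_near_coef hs _ (/ 2) eps' HhsA HhA ltac:(lra) Hnear k) as Hco.
    assert (Hco2 : Cmod (hs k - fst (p (phi j)) k) <= e / 2).
    { apply (Rmult_le_reg_r ((/ 2) ^ k)); auto. }
    specialize (Hys j).
    assert (HyJ : 2 / (INR j + 1) <= 2 / (INR J + 1)).
    { unfold Rdiv. apply Rmult_le_compat_l. lra. apply Rinv_le_contravar. pose proof (pos_INR J); lra.
      apply Rplus_le_compat_r, le_INR; auto. }
    assert (Hyd : Cmod (snd (p (phi j)) - ys) < del).
    { replace (2 / (INR J + 1)) with (2 * / (INR J + 1)) in HyJ by (unfold Rdiv; ring). lra. }
    assert (Hfk : f k = (fst (p (phi j)) k * Cpow (snd (p (phi j))) k)%C).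
    { exact (f_equal (fun F => F k) Ef). }
    rewrite Hfk.
    replace (fst (p (phi j)) k * Cpow (snd (p (phi j))) k - hs k * Cpow ys k)%C with
      (- (hs k - fst (p (phi j)) k) * Cpow (snd (p (phi j))) k + hs k * (Cpow (snd (p (phi j))) k - Cpow ys k))%C by ring.
    eapply Rle_trans. apply Cmod_triangle. rewrite !Cmod_mult, Cmod_opp.
    pose proof (Cmod_pow_le1 _ k Hy1).
    pose proof (pow_diff1 (snd (p (phi j))) ys k Hy1 ltac:(lra)).
    pose proof (Cmod_ge_0 (hs k)). pose proof (Cmod_ge_0 (hs k - fst (p (phi j)) k)). pose proof (pos_INR k).
    assert (Cmod (hs k) * (INR k * Cmod (snd (p (phi j)) - ys)) <= e / 2).
    { apply Rle_trans with (Cmod (hs k) * INR k * del).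
      rewrite <- Rmult_assoc. apply Rmult_le_compat_l. nra. lra.
      unfold del. apply (Rmult_le_reg_r (2 * (Cmod (hs k) * INR k + 1))). nra.
      field_simplify. nra. nra. }
    assert (Cmod (hs k) * Cmod (Cpow (snd (p (phi j))) k - Cpow ys k) <= Cmod (hs k) * (INR k * Cmod (snd (p (phi j)) - ys))).
    { apply Rmult_le_compat_l; auto. }
    nra. }
  exists hs, ys. split; auto. split. lra. split; auto.
  intros h' y Hh' Hy Ef. specialize (Hlow h' y Hh' Hy Ef). lra.
Qed.

Lemma border_of V f h x : (forall f, V f -> in_A0 f) -> V f -> f <> e_one -> V h -> Cmod x <= 1 -> f = Pmap x h ->
  (forall h' y, V h' -> Cmod y <= 1 -> f = Pmap y h' -> Cmod x <= Cmod y) -> bor V h.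
Proof. intros HV0 Hf Hfe Hh Hx Ef Hmin. right. split.
  { intros Hs. apply Hfe. apply Hs. auto. }
  split; auto. intros g y Hg Hy Eh.
  assert (Hx0 : 0 < Cmod x).
  { destruct (Rle_lt_or_eq_dec 0 (Cmod x) (Cmod_ge_0 x)) as [H|H]; auto. exfalso. apply Hfe.
    symmetry in H. apply Cmod_eq_0 in H. rewrite Ef, H. exact (Pmap_0 h (proj2 (HV0 h Hh))). }
  assert (Hyx : Cmod (y * x) <= 1). { rewrite Cmod_mult. pose proof (Cmod_ge_0 y). nra. }
  specialize (Hmin g (y * x)%C Hg Hyx ltac:(rewrite Ef, Eh; apply Pmap_Pmap)).
  rewrite Cmod_mult in Hmin. pose proof (Cmod_ge_0 y). nra. Qed.
Lemma hadamard_comm f g : hadamard f g = hadamard g f.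
Proof. apply functional_extensionality; intros k; unfold hadamard; ring. Qed.

Lemma eval_e_g g z : eval (hadamard e_one g) z (g 0%nat).
Proof. rewrite hadamard_comm. apply eval_e_part. Qed.

Lemma part1 V g : (forall f, V f -> in_A0 f) -> lu_compact V -> complete (dualT V) -> in_Abar g ->
  forall w : C, lam_image V g w <->
     exists f, bor V f /\ exists z : C, Cmod z <= 1 /\ eval (hadamard f g) z w.
Proof. intros HV0 Hc HT Hg w. split.
  - intros [f [Hf Hw]].
    destruct (classic (f = e_one)) as [Efe|Efe].
    + subst f. assert (Hw0 : w = g 0%nat) by apply (is_sum_unique _ _ _ Hw (eval_e_g g 1%C)). subst w.
      destruct (classic (is_singleton_e V)) as [Hs|Hs].
      * exists e_one. split. left; auto. exists 1%C. split. rewrite Cmod_1; lra. apply eval_e_g.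
      * assert (Hh : exists h, V h /\ h <> e_one).
        { apply NNPP. intros Hn. apply Hs. intros h. split.
          intros Hh. apply NNPP. intros Hne. apply Hn. exists h; auto.
          intros E; subst; auto. }
        destruct Hh as [h [Hh Hhe]].
        destruct (border_exists V h HV0 Hc Hh) as [hs [x [Hhs [Hx [Ef Hmin]]]]].
        exists hs. split. apply (border_of V h hs x); auto.
        exists (RtoC 0). split. rewrite Cmod_0; lra.
        pose proof (eval_at_0 (hadamard hs g)) as E. unfold hadamard at 2 in E.
        rewrite (proj2 (HV0 hs Hhs)) in E. replace (1 * g 0%nat)%C with (g 0%nat) in E by ring. exact E.
    + destruct (border_exists V f HV0 Hc Hf) as [hs [x [Hhs [Hx [Ef Hmin]]]]].
      exists hs. split. apply (border_of V f hs x); auto.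
      exists x. split; auto. apply eval_Pmap_inv. rewrite <- Ef. exact Hw.
  - intros [f [Hb [z [Hz Hw]]]].
    destruct Hb as [[Hs Ef]|[Hns [Hf _]]].
    + subst f. assert (Hw0 : w = g 0%nat) by apply (is_sum_unique _ _ _ Hw (eval_e_g g z)). subst w.
      exists e_one. split. apply Hs; auto. apply eval_e_g.
    + destruct (Ceq_dec w (g 0%nat)) as [E|E].
      * subst w. apply (core0 V g f); auto.
      * apply (core V g f z w); auto.
Qed.
Fixpoint rfsum (f : nat -> R) (N : nat) : R :=
  match N with O => 0 | S n => rfsum f n + f n end.

Lemma rfsum_nonneg f N : (forall n, 0 <= f n) -> 0 <= rfsum f N.
Proof. intros H; induction N; simpl. lra. specialize (H N). lra. Qed.

Lemma rfsum_mono f K M : (forall n, 0 <= f n) -> (K <= M)%nat -> rfsum f K <= rfsum f M.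
Proof. intros H HKM. induction HKM. lra. simpl. specialize (H m). lra. Qed.

Lemma rfsum_term f n M : (forall n, 0 <= f n) -> (n < M)%nat -> f n <= rfsum f M.
Proof. intros H HnM. induction HnM; simpl. pose proof (rfsum_nonneg f n H). lra.
  specialize (H m). lra. Qed.

Lemma fsum_zero_ext (f : nat -> C) K M : (forall n, (K <= n)%nat -> f n = RtoC 0) -> (K <= M)%nat -> fsum f M = fsum f K.
Proof. intros H HKM. induction HKM. auto. simpl. rewrite IHHKM, H by lia. ring. Qed.

Lemma Cmod_fsum_diff (f : nat -> C) (a : nat -> R) K M : (K <= M)%nat -> (forall n, Cmod (f n) <= a n) ->
  Cmod (fsum f M - fsum f K) <= rfsum a M - rfsum a K.
Proof. intros HKM H. induction HKM. replace (fsum f K - fsum f K)%C with (RtoC 0) by ring. rewrite Cmod_0; lra.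
  simpl. replace (fsum f m + f m - fsum f K)%C with ((fsum f m - fsum f K) + f m)%C by ring.
  eapply Rle_trans. apply Cmod_triangle. specialize (H m). lra. Qed.

Lemma Cmod_fsum_le2 (f : nat -> C) (a : nat -> R) M : (forall n, Cmod (f n) <= a n) -> Cmod (fsum f M) <= rfsum a M.
Proof. intros H. induction M; simpl. rewrite Cmod_0; lra. eapply Rle_trans. apply Cmod_triangle. specialize (H M). lra. Qed.

Lemma sum_n_fsum (f : nat -> C) N : sum_n (f : nat -> C_NormedModule) N = fsum f (S N).
Proof. induction N. rewrite sum_O. simpl. unfold plus. simpl. ring.
  rewrite sum_Sn, IHN. reflexivity. Qed.

Lemma fsum_shift (g : nat -> C) K : fsum g (S K) = (g 0%nat + fsum (fun n => g (S n)) K)%C.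
Proof. induction K; simpl in *. ring. rewrite IHK. ring. Qed.

Lemma rfsum_shift (g : nat -> R) K : rfsum g (S K) = g 0%nat + rfsum (fun n => g (S n)) K.
Proof. induction K; simpl in *. ring. rewrite IHK. ring. Qed.

Lemma fubini (u : nat -> nat -> C) (a : nat -> nat -> R) :
  (forall m n, Cmod (u m n) <= a m n) -> (forall m n, (m < n)%nat -> u m n = RtoC 0 /\ a m n = 0) ->
  ex_series (fun m => rfsum (a m) (S m)) ->
  (forall n, exists cn, is_sum (fun m => u m n) cn) /\
  forall Ssum (col : nat -> C), (forall n, is_sum (fun m => u m n) (col n)) ->
    is_sum (fun m => fsum (u m) (S m)) Ssum -> is_sum col Ssum.
Proof. intros Hua Hz Hra.
  assert (Ha0 : forall m n, 0 <= a m n) by (intros; eapply Rle_trans; [apply Cmod_ge_0|apply Hua]).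
  set (ra := fun m => rfsum (a m) (S m)).
  assert (Hra0 : forall m, 0 <= ra m) by (intros; apply rfsum_nonneg; auto).
  assert (Hcol : forall m n, Cmod (u m n) <= ra m).
  { intros m n. destruct (le_lt_dec n m) as [Hnm|Hnm].
    - eapply Rle_trans. apply Hua. apply rfsum_term; auto. lia.
    - rewrite (proj1 (Hz m n Hnm)), Cmod_0. auto. }
  split.
  - intros n. apply (is_sum_ex _ ra); auto.
  - intros Ssum col Hc HS. unfold is_sum, is_series.
    apply (proj2 (filterlim_locally (F:=eventually) (sum_n (col : nat -> C_NormedModule)) Ssum)).
    intros eps.
    destruct (tail_small ra Hra0 Hra (eps / 2) ltac:(destruct eps; simpl; lra)) as [N0 HN0].
    exists N0. intros N HN. apply C_NormedModule_mixin_compat1.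
    rewrite sum_n_fsum.
    pose proof (is_sum_fsum (fun n m => u m n) col (S N) Hc) as HF. simpl in HF.
    pose proof (is_sum_minus _ _ _ _ HS HF) as D.
    set (Dm := fun m => (fsum (u m) (S m) - fsum (fun j => u m j) (S N))%C) in D.
    assert (HD0 : forall m, (m <= N)%nat -> Dm m = RtoC 0).
    { intros m Hm. unfold Dm. change (fun j => u m j) with (u m). rewrite (fsum_zero_ext (u m) (S m) (S N)). ring.
      intros n Hn. apply Hz. lia. lia. }
    assert (Htail : is_sum (fun i => Dm (S N + i)%nat) (Ssum - fsum col (S N))%C).
    { unfold is_sum. apply (is_series_incr_n (K:=C_AbsRing) (V:=C_NormedModule)). lia.
      simpl pred. rewrite sum_n_zero by auto. replace (plus _ _) with (Ssum - fsum col (S N))%C. exact D.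
      unfold plus; simpl. ring. }
    assert (Hb : Cmod (Ssum - fsum col (S N))%C <= Series (fun i => ra (S N + i)%nat)).
    { eapply is_sum_bound. exact Htail. 2: apply Series_correct; apply (ex_series_incr_n (K:=R_AbsRing) (V:=R_NormedModule) ra); exact Hra.
      intros i. unfold Dm. eapply Rle_trans. apply (Cmod_fsum_diff (u (S N + i)%nat) (a (S N + i)%nat) (S N) (S (S N + i))). lia. auto.
      unfold ra. pose proof (rfsum_nonneg (a (S N + i)%nat) (S N) (Ha0 _)). lra. }
    specialize (HN0 (S N) ltac:(lia)).
    change (minus (fsum col (S N)) Ssum) with (Cminus (fsum col (S N)) Ssum).
    replace (Cminus (fsum col (S N)) Ssum) with (- (Ssum - fsum col (S N)))%C by ring.
    rewrite Cmod_opp. destruct eps; simpl in *. lra.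
Qed.
Lemma sum_n_Re (u : nat -> C) N : Re (sum_n (u : nat -> C_NormedModule) N) = sum_n (fun n => Re (u n)) N.
Proof. induction N. rewrite !sum_O. reflexivity. rewrite !sum_Sn, <- IHN. reflexivity. Qed.

Lemma sum_n_RtoC (f : nat -> R) N : sum_n ((fun n => RtoC (f n)) : nat -> C_NormedModule) N = RtoC (sum_n f N).
Proof. induction N. rewrite !sum_O. reflexivity. rewrite !sum_Sn, IHN. unfold plus; simpl. rewrite RtoC_plus. reflexivity. Qed.

Lemma C2R (u : nat -> C) X : is_sum u X -> is_series (fun n => Re (u n)) (Re X).
Proof. intros H. unfold is_sum, is_series in *.
  apply (proj2 (filterlim_locally (F:=eventually) _ _)). intros eps.
  pose proof (proj1 (filterlim_locally (F:=eventually) _ _) H (pos_div_2 eps)) as [N HN].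
  exists N. intros n Hn. specialize (HN n Hn). apply C_NormedModule_mixin_compat2 in HN.
  change (Rabs (sum_n (fun n => Re (u n)) n - Re X) < eps).
  rewrite <- sum_n_Re. eapply Rle_lt_trans. 
  2: { eapply Rlt_le_trans. exact HN. simpl. destruct eps as [e He]; simpl.
       assert (sqrt 2 < 2). { rewrite <- (sqrt_square 2) at 2 by lra. apply sqrt_lt_1_alt. lra. }
       nra. }
  change (minus (sum_n (u : nat -> C_NormedModule) n) X) with (Cminus (sum_n (u : nat -> C_NormedModule) n) X).
  replace (Re (sum_n (u : nat -> C_NormedModule) n) - Re X) with (Re (Cminus (sum_n (u : nat -> C_NormedModule) n) X)) by (unfold Cminus, Re; simpl; ring).
  apply re_le_Cmod. Qed.

Lemma R2C (f : nat -> R) X : is_series f X -> is_sum (fun n => RtoC (f n)) (RtoC X).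
Proof. intros H. unfold is_sum, is_series in *.
  apply (proj2 (filterlim_locally (F:=eventually) _ _)). intros eps.
  pose proof (proj1 (filterlim_locally (F:=eventually) _ _) H eps) as [N HN].
  exists N. intros n Hn. specialize (HN n Hn). apply C_NormedModule_mixin_compat1.
  rewrite sum_n_RtoC. change (minus (RtoC (sum_n f n)) (RtoC X)) with (Cminus (RtoC (sum_n f n)) (RtoC X)).
  rewrite <- RtoC_minus, Cmod_R. exact HN. Qed.

Fixpoint Ec (a : C) (m : nat) : nat -> C :=
  match m with
  | O => fun n => match n with O => RtoC 1 | S _ => RtoC 0 end
  | S m' => fun n => (a * Ec a m' n + match n with O => RtoC 0 | S n' => Ec a m' n' end)%C
  end.

Fixpoint Er (s : R) (m : nat) : nat -> R :=
  match m with
  | O => fun n => match n with O => 1 | S _ => 0 end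
  | S m' => fun n => s * Er s m' n + match n with O => 0 | S n' => Er s m' n' end
  end.

Lemma Ec_zero a m n : (m < n)%nat -> Ec a m n = RtoC 0.
Proof. revert n; induction m; intros n H; simpl. destruct n. lia. auto.
  rewrite IHm by lia. destruct n. lia. rewrite IHm by lia. ring. Qed.

Lemma Er_zero s m n : (m < n)%nat -> Er s m n = 0.
Proof. revert n; induction m; intros n H; simpl. destruct n. lia. auto.
  rewrite IHm by lia. destruct n. lia. rewrite IHm by lia. ring. Qed.

Lemma Er_nonneg s m n : 0 <= s -> 0 <= Er s m n.
Proof. intros Hs. revert n; induction m; intros n; simpl. destruct n; lra.
  destruct n. specialize (IHm 0%nat). nra. pose proof (IHm (S n)). pose proof (IHm n). nra. Qed.

Lemma Ec_le a m n : Cmod (Ec a m n) <= Er (Cmod a) m n.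
Proof. revert n; induction m; intros n; simpl.
  - destruct n. rewrite Cmod_1; lra. rewrite Cmod_0; lra.
  - eapply Rle_trans. apply Cmod_triangle. rewrite Cmod_mult.
    assert (Cmod a * Cmod (Ec a m n) <= Cmod a * Er (Cmod a) m n) by (apply Rmult_le_compat_l; [apply Cmod_ge_0|auto]).
    destruct n. rewrite Cmod_0. lra. specialize (IHm n). lra. Qed.

Lemma fsum_plus f g N : fsum (fun n => (f n + g n)%C) N = (fsum f N + fsum g N)%C.
Proof. induction N; simpl. ring. rewrite IHN. ring. Qed.

Lemma rfsum_plus f g N : rfsum (fun n => f n + g n) N = rfsum f N + rfsum g N.
Proof. induction N; simpl. ring. rewrite IHN. ring. Qed.

Lemma rfsum_scal a f N : rfsum (fun n => a * f n) N = a * rfsum f N.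
Proof. induction N; simpl. ring. rewrite IHN. ring. Qed.

Lemma rfsum_ext f g N : (forall n, f n = g n) -> rfsum f N = rfsum g N.
Proof. intros H; induction N; simpl; congruence. Qed.

Lemma Ec_sum a z m : fsum (fun n => (Ec a m n * Cpow z n)%C) (S m) = Cpow (a + z)%C m.
Proof. induction m.
  - simpl. ring.
  - simpl Ec. rewrite (fsum_ext _ (fun n => (a * (Ec a m n * Cpow z n)) + (match n with O => RtoC 0 | S n' => Ec a m n' end * Cpow z n))%C)
      by (intros; ring).
    rewrite fsum_plus, fsum_scal.
    assert (H2 : fsum (fun n => match n with O => RtoC 0 | S n' => Ec a m n' end * Cpow z n)%C (S (S m)) = (z * Cpow (a + z) m)%C).
    { rewrite fsum_shift. rewrite (fsum_ext _ (fun n => z * (Ec a m n * Cpow z n))%C) by (intros; simpl; ring).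
      rewrite fsum_scal, IHm. ring. }
    rewrite H2.
    change (fsum (fun n => Ec a m n * Cpow z n) (S (S m)))%C with (fsum (fun n => Ec a m n * Cpow z n) (S m) + Ec a m (S m) * Cpow z (S m))%C.
    rewrite (Ec_zero a m (S m)) by lia. rewrite IHm. simpl. ring. Qed.

Lemma Er_sum s R m : rfsum (fun n => Er s m n * R ^ n) (S m) = (s + R) ^ m.
Proof. induction m.
  - simpl. ring.
  - simpl Er. rewrite (rfsum_ext _ (fun n => (s * (Er s m n * R ^ n)) + (match n with O => 0 | S n' => Er s m n' end * R ^ n)))
      by (intros; ring).
    rewrite rfsum_plus, rfsum_scal.
    assert (H2 : rfsum (fun n => match n with O => 0 | S n' => Er s m n' end * R ^ n) (S (S m)) = R * (s + R) ^ m).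
    { rewrite rfsum_shift. rewrite (rfsum_ext _ (fun n => R * (Er s m n * R ^ n))) by (intros; simpl; ring).
      rewrite rfsum_scal, IHm. ring. }
    rewrite H2.
    change (rfsum (fun n => Er s m n * R ^ n) (S (S m))) with (rfsum (fun n => Er s m n * R ^ n) (S m) + Er s m (S m) * R ^ (S m)).
    rewrite (Er_zero s m (S m)) by lia. rewrite IHm. simpl. ring. Qed.
Definition csum (u : nat -> C) : C := epsilon (@inhabits C (RtoC 0)) (fun w => is_sum u w).
Lemma csum_spec u : (exists w, is_sum u w) -> is_sum u (csum u).
Proof. intros H. unfold csum. apply (epsilon_spec (@inhabits C (RtoC 0)) (fun w => is_sum u w)). exact H. Qed.

Lemma fsum_RtoC (f : nat -> R) N : fsum (fun n => RtoC (f n)) N = RtoC (rfsum f N).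
Proof. induction N; simpl. reflexivity. rewrite IHN, RtoC_plus. reflexivity. Qed.

Lemma taylor_shift (c : coef) rho p : abs_conv c rho -> Cmod p < rho ->
  exists b : coef, abs_conv b (rho - Cmod p) /\
    forall z, Cmod z <= rho - Cmod p -> eval b z (val c (p + z)%C).
Proof.
  intros Hc Hp. set (s := Cmod p). set (Rr := rho - s).
  assert (Hs : 0 <= s) by apply Cmod_ge_0.
  assert (HR : 0 < Rr) by (unfold Rr, s; lra).
  assert (Hrho : s + Rr = rho) by (unfold Rr; ring).
  set (a := fun m n => Cmod (c m) * Er s m n * Rr ^ n).
  assert (Ha0 : forall m n, 0 <= a m n).
  { intros. unfold a. apply Rmult_le_pos. apply Rmult_le_pos. apply Cmod_ge_0. apply Er_nonneg; auto. apply pow_le; lra. }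
  assert (Hrow : forall m, Cmod (c m) * rho ^ m = rfsum (a m) (S m)).
  { intros m. unfold a. rewrite (rfsum_ext _ (fun n => Cmod (c m) * (Er s m n * Rr ^ n))) by (intros; ring).
    rewrite rfsum_scal, Er_sum, Hrho. auto. }
  assert (Hrows : ex_series (fun m => rfsum (a m) (S m))) by (eapply ex_series_R_ext; [exact Hrow | exact Hc]).
  assert (Hazero : forall m n, (m < n)%nat -> a m n = 0) by (intros; unfold a; rewrite Er_zero; auto; ring).
  assert (Hale : forall m n, a m n <= Cmod (c m) * rho ^ m).
  { intros m n. rewrite Hrow. destruct (le_lt_dec n m). apply rfsum_term; auto. lia.
    rewrite Hazero by auto. apply rfsum_nonneg; auto. }
  assert (HRn : forall n, 0 < Rr ^ n) by (intros; apply pow_lt; lra).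
  set (b := fun n => csum (fun m => (c m * Ec p m n)%C)).
  assert (Hbcol : forall n, is_sum (fun m => (c m * Ec p m n)%C) (b n)).
  { intros n. apply csum_spec. apply (is_sum_ex _ (fun m => Cmod (c m) * rho ^ m * / Rr ^ n)).
    - intros m. rewrite Cmod_mult. specialize (Hale m n). unfold a in Hale.
      pose proof (Ec_le p m n). fold s in H.
      apply (Rmult_le_reg_r (Rr ^ n)); auto.
      replace (Cmod (c m) * rho ^ m * / Rr ^ n * Rr ^ n) with (Cmod (c m) * rho ^ m) by (field; specialize (HRn n); lra).
      pose proof (Cmod_ge_0 (c m)). specialize (HRn n).
      assert (Cmod (c m) * Cmod (Ec p m n) <= Cmod (c m) * Er s m n) by (apply Rmult_le_compat_l; auto).
      nra.
    - apply ex_series_scal_r. exact Hc. }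
  assert (Hid : forall z, Cmod z <= Rr -> eval b z (val c (p + z)%C)).
  { intros z Hz.
    set (u := fun m n => (c m * Ec p m n * Cpow z n)%C).
    destruct (fubini u a) as [_ Hf].
    - intros m n. unfold u, a. rewrite !Cmod_mult, Cmod_pow.
      pose proof (Ec_le p m n). fold s in H.
      assert (Cmod z ^ n <= Rr ^ n) by (apply pow_incr; split; auto; apply Cmod_ge_0).
      pose proof (Cmod_ge_0 (c m)). pose proof (Cmod_ge_0 (Ec p m n)). pose proof (pow_le (Cmod z) n (Cmod_ge_0 z)).
      assert (A1 : Cmod (c m) * Cmod (Ec p m n) <= Cmod (c m) * Er s m n) by (apply Rmult_le_compat_l; auto).
      apply Rmult_le_compat; auto. apply Rmult_le_pos; auto.
    - intros m n H. split. unfold u. rewrite Ec_zero by auto. ring. apply Hazero; auto.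
    - exact Hrows.
    - apply (Hf (val c (p + z)%C) (fun n => (b n * Cpow z n)%C)).
      + intros n. unfold u. pose proof (is_sum_scal (Cpow z n) _ _ (Hbcol n)) as H.
        replace (b n * Cpow z n)%C with (Cpow z n * b n)%C by ring.
        eapply is_sum_ext. 2: exact H. intros m; simpl; ring.
      + eapply is_sum_ext. 2: { apply (val_eval_conv c rho (p + z)%C). exact Hc.
          eapply Rle_trans. apply Cmod_triangle. fold s. lra. }
        intros m. unfold u. cbv beta. rewrite (fsum_ext _ (fun n => c m * (Ec p m n * Cpow z n))%C) by (intros; ring).
        rewrite fsum_scal, Ec_sum. reflexivity. }
  exists b. split; [| exact Hid].
  assert (Hcolex : forall n, ex_series (fun m => a m n)).
  { intros n. apply (ex_series_R_le _ (fun m => Cmod (c m) * rho ^ m)); auto. }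
  set (beta := fun n => Series (fun m => a m n)).
  assert (Hbeta : ex_series beta).
  { destruct (fubini (fun m n => RtoC (a m n)) a) as [_ Hf].
    - intros m n. rewrite Cmod_R, Rabs_pos_eq; auto. lra.
    - intros m n H. rewrite Hazero by auto. auto.
    - exact Hrows.
    - pose proof (Hf (RtoC (Series (fun m => rfsum (a m) (S m)))) (fun n => RtoC (beta n))) as H.
      assert (H2 : is_sum (fun n => RtoC (beta n)) (RtoC (Series (fun m => rfsum (a m) (S m))))).
      { apply H. intros n. apply R2C. apply Series_correct. auto.
        eapply is_sum_ext. 2: { apply R2C. apply Series_correct. exact Hrows. }
        intros m. cbv beta. rewrite fsum_RtoC. reflexivity. }
      apply C2R in H2. eexists. exact H2. }
  unfold abs_conv. apply (ex_series_R_le _ beta); auto.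
  intros n. split. apply abs_conv_nonneg; lra.
  pose proof (is_sum_scal (RtoC (Rr ^ n)) _ _ (Hbcol n)) as H.
  replace (Cmod (b n) * Rr ^ n) with (Cmod (RtoC (Rr ^ n) * b n)%C).
  2: { rewrite Cmod_mult, Cmod_R, Rabs_pos_eq. ring. specialize (HRn n); lra. }
  eapply is_sum_bound. exact H. 2: apply Series_correct; auto.
  intros m. cbv beta. rewrite !Cmod_mult, Cmod_R, Rabs_pos_eq by (specialize (HRn n); lra).
  unfold a. pose proof (Ec_le p m n). fold s in H0. pose proof (Cmod_ge_0 (c m)). specialize (HRn n).
  assert (Cmod (c m) * Cmod (Ec p m n) <= Cmod (c m) * Er s m n) by (apply Rmult_le_compat_l; auto).
  nra.
Qed.
Lemma is_sum_single k (x : C) : is_sum (fun n => if Nat.eqb n k then x else RtoC 0) x.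
Proof. unfold is_sum. apply (is_series_decr_n (K:=C_AbsRing) (V:=C_NormedModule) _ (S k)). lia.
  simpl pred. rewrite (sum_n_delta _ k k x) by (auto; intros; reflexivity).
  replace (plus _ _) with (RtoC 0) by (unfold plus, opp; simpl; ring).
  apply is_sum_zero. intros n. destruct (Nat.eqb_spec (S k + n) k). lia. reflexivity. Qed.

Lemma pow_tail_bound (r Rb : R) n k : 0 <= r -> r <= Rb / 2 -> 0 < Rb -> (S k <= n)%nat ->
  r ^ n <= (2 / Rb) ^ (S k) * r ^ (S k) * Rb ^ n.
Proof. intros Hr HrR HRb Hn. replace n with (S k + (n - S k))%nat by lia. set (j := (n - S k)%nat).
  rewrite !pow_add. 
  assert (H1 : r ^ j <= Rb ^ j) by (apply pow_incr; lra).
  assert (H2 : (2 / Rb) ^ S k * Rb ^ S k = 2 ^ S k).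
  { rewrite <- Rpow_mult_distr. replace (2 / Rb * Rb) with 2 by (field; lra). auto. }
  assert (H3 : 1 <= 2 ^ S k). { apply pow_R1_Rle. lra. }
  assert (0 <= r ^ S k) by (apply pow_le; auto). assert (0 <= r ^ j) by (apply pow_le; auto).
  assert (0 < Rb ^ j) by (apply pow_lt; auto).
  replace ((2 / Rb) ^ S k * r ^ S k * (Rb ^ S k * Rb ^ j)) with (2 ^ S k * (r ^ S k * Rb ^ j)) by (rewrite <- H2; ring).
  apply Rle_trans with (r ^ S k * Rb ^ j). apply Rmult_le_compat_l; auto.
  rewrite <- (Rmult_1_l (r ^ S k * Rb ^ j)) at 1. apply Rmult_le_compat_r; auto.
  apply Rmult_le_pos; lra. Qed.

Lemma lead_est (b : coef) Rb k : 0 < Rb -> abs_conv b Rb -> (1 <= k)%nat ->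
  (forall n, (1 <= n)%nat -> (n < k)%nat -> b n = RtoC 0) ->
  exists K, 0 <= K /\ forall z, Cmod z <= Rb / 2 -> Cmod (val b z - b 0%nat - b k * Cpow z k)%C <= K * Cmod z ^ (S k).
Proof. intros HRb Hb Hk Hz.
  set (Sb := Series (fun n => Cmod (b n) * Rb ^ n)).
  assert (HSb : 0 <= Sb) by (apply Series_nonneg; auto; intros; apply abs_conv_nonneg; lra).
  exists ((2 / Rb) ^ S k * Sb). split. apply Rmult_le_pos; auto. apply pow_le. apply Rlt_le, Rdiv_lt_0_compat; lra.
  intros z Hzr.
  assert (Ev := val_eval_conv b Rb z Hb ltac:(lra)).
  pose proof (is_sum_minus _ _ _ _ (is_sum_minus _ _ _ _ Ev (is_sum_single 0 (b 0%nat))) (is_sum_single k (b k * Cpow z k)%C)) as D.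
  replace ((2 / Rb) ^ S k * Sb * Cmod z ^ S k) with (Sb * ((2 / Rb) ^ S k * Cmod z ^ S k)) by ring.
  eapply is_sum_bound. exact D.
  2:{ apply (is_series_scal_r ((2 / Rb) ^ S k * Cmod z ^ S k)). apply Series_correct. exact Hb. }
  intros n. cbv beta.
  replace (Cmod (b n) * Rb ^ n * ((2 / Rb) ^ S k * Cmod z ^ S k)) with ((2 / Rb) ^ S k * Cmod z ^ S k * (Cmod (b n) * Rb ^ n)) by ring.
  assert (0 <= (2 / Rb) ^ S k * Cmod z ^ S k * (Cmod (b n) * Rb ^ n)).
  { apply Rmult_le_pos. apply Rmult_le_pos; apply pow_le. apply Rlt_le, Rdiv_lt_0_compat; lra. apply Cmod_ge_0.
    apply abs_conv_nonneg; lra. }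
  destruct (Nat.eqb_spec n 0) as [E0|E0].
  - subst n. destruct (Nat.eqb_spec 0 k). lia. simpl. replace (b 0%nat * 1 - b 0%nat - 0)%C with (RtoC 0) by ring.
    rewrite Cmod_0. auto.
  - destruct (Nat.eqb_spec n k) as [Ek|Ek].
    + subst n. replace (b k * Cpow z k - 0 - b k * Cpow z k)%C with (RtoC 0) by ring. rewrite Cmod_0. auto.
    + destruct (le_lt_dec k n) as [Hkn|Hkn].
      * replace (b n * Cpow z n - 0 - 0)%C with (b n * Cpow z n)%C by ring.
        rewrite Cmod_mult, Cmod_pow.
        pose proof (pow_tail_bound (Cmod z) Rb n k (Cmod_ge_0 z) Hzr HRb ltac:(lia)).
        pose proof (Cmod_ge_0 (b n)).
        replace ((2 / Rb) ^ S k * Cmod z ^ S k * (Cmod (b n) * Rb ^ n)) with (Cmod (b n) * ((2 / Rb) ^ S k * Cmod z ^ S k * Rb ^ n)) by ring.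
        apply Rmult_le_compat_l; auto.
      * rewrite Hz by lia. replace (0 * Cpow z n - 0 - 0)%C with (RtoC 0) by ring. rewrite Cmod_0, Rmult_0_l, Rmult_0_r. lra.
Qed.

Lemma Re_fsum f N : Re (fsum f N) = rfsum (fun j => Re (f j)) N.
Proof. induction N; simpl. reflexivity. rewrite <- IHN. reflexivity. Qed.

Lemma rfsum_zero f N : (forall j, (j < N)%nat -> f j = 0) -> rfsum f N = 0.
Proof. intros H; induction N; simpl. auto. rewrite IHN. rewrite (H N) by lia. ring. intros; apply H; lia. Qed.

Lemma direction (q : C) k : q <> RtoC 0 -> (1 <= k)%nat -> exists u, Cmod u = 1 /\ Re (q * Cpow u k) < 0.
Proof. intros Hq Hk. set (N := S (2 * k)). set (w := omega N).
  assert (HN : (1 <= N)%nat) by (unfold N; lia).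
  set (x := fun j => (q * Cpow (Cpow w k) j)%C).
  assert (S1 : fsum x N = RtoC 0).
  { unfold x, w. rewrite fsum_scal. rewrite geom_root by auto.
    rewrite Nat.mod_small by (unfold N; lia). destruct (Nat.eqb_spec k 0). lia. ring. }
  assert (S2 : fsum (fun j => x j * x j)%C N = RtoC 0).
  { unfold x. rewrite (fsum_ext _ (fun j => (q * q) * Cpow (Cpow w (2 * k)) j)%C).
    rewrite fsum_scal. unfold w. rewrite geom_root by auto.
    rewrite Nat.mod_small by (unfold N; lia). destruct (Nat.eqb_spec (2 * k) 0). lia. ring.
    intros j. rewrite <- !Cpow_mult_r. replace (2 * k * j)%nat with (k * j + k * j)%nat by lia.
    rewrite Cpow_add_r. ring. }
  assert (Hxm : forall j, Cmod (x j) = Cmod q).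
  { intros j. unfold x. rewrite Cmod_mult, !Cmod_pow. unfold w, omega. rewrite Cmod_cis, !pow1. ring. }
  assert (Hsq : forall j, Re (x j) ^ 2 = (Cmod q ^ 2 + Re (x j * x j)%C) / 2).
  { intros j. rewrite <- (Hxm j), Cmod2_alt. destruct (x j) as [a b]. unfold Re, Im, Cmult; simpl. field. }
  apply NNPP. intros Hno.
  assert (Hall : forall j, 0 <= Re (x j)).
  { intros j. apply Rnot_lt_le. intros Hlt. apply Hno. exists (Cpow w j). split.
    rewrite Cmod_pow. unfold w, omega. rewrite Cmod_cis, pow1. auto.
    unfold x in Hlt. rewrite <- !Cpow_mult_r in *. rewrite Nat.mul_comm. auto. }
  assert (Hsum0 : rfsum (fun j => Re (x j)) N = 0) by (rewrite <- Re_fsum, S1; reflexivity).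
  assert (Hz : forall j, (j < N)%nat -> Re (x j) = 0).
  { intros j Hj. apply Rle_antisym. rewrite <- Hsum0. apply (rfsum_term (fun j => Re (x j))); auto. auto. }
  assert (Hsq0 : rfsum (fun j => Re (x j) ^ 2) N = 0).
  { apply rfsum_zero. intros j Hj. rewrite Hz by auto. ring. }
  rewrite (rfsum_ext _ (fun j => (Cmod q ^ 2 + Re (x j * x j)%C) / 2)) in Hsq0 by auto.
  rewrite (rfsum_ext _ (fun j => / 2 * (Cmod q ^ 2) + / 2 * Re (x j * x j)%C)) in Hsq0 by (intros; unfold Rdiv; ring).
  rewrite rfsum_plus, rfsum_scal, rfsum_scal, <- Re_fsum, S2 in Hsq0.
  assert (Hc : forall M, rfsum (fun _ => Cmod q ^ 2) M = INR M * Cmod q ^ 2).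
  { induction M. simpl; ring. change (rfsum (fun _ => Cmod q ^ 2) (S M)) with (rfsum (fun _ => Cmod q ^ 2) M + Cmod q ^ 2). rewrite IHM, S_INR. ring. }
  rewrite Hc in Hsq0. simpl Re in Hsq0.
  assert (0 < Cmod q) by (apply Cmod_gt_0; auto). assert (0 < INR N) by (apply lt_0_INR; lia).
  assert (0 < INR N * Cmod q ^ 2) by (apply Rmult_lt_0_compat; auto; apply pow_lt; auto).
  lra.
Qed.

Lemma min_exists (P : nat -> Prop) : (exists n, P n) -> exists n, P n /\ forall m, (m < n)%nat -> ~ P m.
Proof. intros [n Hn]. revert Hn. induction n as [n IH] using lt_wf_ind. intros Hn.
  destruct (classic (exists m, (m < n)%nat /\ P m)) as [[m [Hm Pm]]|Hno].
  - apply (IH m Hm Pm).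
  - exists n. split; auto. intros m Hm Pm. apply Hno. exists m; auto. Qed.

Lemma dalembert (b : coef) Rb c' : 0 < Rb -> abs_conv b Rb -> b 0%nat <> c' ->
  (exists n, (1 <= n)%nat /\ b n <> RtoC 0) ->
  forall eps, 0 < eps -> exists z, Cmod z < eps /\ Cmod z <= Rb /\ Cmod (val b z - c') < Cmod (b 0%nat - c').
Proof. intros HRb Hb Hb0 Hex eps Heps.
  destruct (min_exists _ Hex) as [k [[Hk1 Hk] Hmin]].
  assert (Hzero : forall n, (1 <= n)%nat -> (n < k)%nat -> b n = RtoC 0).
  { intros n H1 H2. apply NNPP. intros Hn. apply (Hmin n H2). auto. }
  destruct (lead_est b Rb k HRb Hb Hk1 Hzero) as [K [HK HKb]].
  set (d0 := (b 0%nat - c')%C).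
  assert (Hd0 : d0 <> RtoC 0). { intros E. apply Hb0. unfold d0 in E. replace (b 0%nat) with (b 0%nat - c' + c')%C by ring. rewrite E. ring. }
  assert (Hd0m : 0 < Cmod d0) by (apply Cmod_gt_0; auto).
  set (q := (b k / d0)%C).
  assert (Hq : q <> RtoC 0). { unfold q. intros E. apply Hk. replace (b k) with (b k / d0 * d0)%C by (field; auto). rewrite E. ring. }
  destruct (direction q k Hq Hk1) as [u [Hu Hre]].
  set (s := (q * Cpow u k)%C). set (al := - Re s).
  assert (Hal : 0 < al) by (unfold al, s; lra).
  assert (Hsm : Cmod s = Cmod q). { unfold s. rewrite Cmod_mult, Cmod_pow, Hu, pow1. ring. }
  assert (Hsp : 0 < Cmod s) by (rewrite Hsm; apply Cmod_gt_0; auto).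
  assert (Hals : al <= Cmod s). { unfold al. pose proof (re_le_Cmod s). apply Rabs_le_between in H. lra. }
  set (t := Rmin (Rmin (Rmin (eps / 2) (Rb / 2)) (Rmin 1 (al / (Cmod s * Cmod s)))) (Rmin (1 / Cmod s) (Cmod d0 * al / (4 * (K + 1))))).
  assert (Ht0 : 0 < t).
  { unfold t. repeat apply Rmin_glb_lt; try lra; apply Rdiv_lt_0_compat; try nra. }
  assert (Ht1 : t <= eps / 2) by (unfold t; repeat (eapply Rle_trans; [apply Rmin_l|]); lra).
  assert (Ht2 : t <= Rb / 2) by (unfold t; eapply Rle_trans; [apply Rmin_l|]; eapply Rle_trans; [apply Rmin_l|]; apply Rmin_r).
  assert (Ht3 : t <= 1) by (unfold t; eapply Rle_trans; [apply Rmin_l|]; eapply Rle_trans; [apply Rmin_r|]; apply Rmin_l).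
  assert (Ht4 : t <= al / (Cmod s * Cmod s)) by (unfold t; eapply Rle_trans; [apply Rmin_l|]; eapply Rle_trans; [apply Rmin_r|]; apply Rmin_r).
  assert (Ht5 : t <= 1 / Cmod s) by (unfold t; eapply Rle_trans; [apply Rmin_r|]; apply Rmin_l).
  assert (Ht6 : t <= Cmod d0 * al / (4 * (K + 1))) by (unfold t; eapply Rle_trans; [apply Rmin_r|]; apply Rmin_r).
  set (z := (RtoC t * u)%C).
  assert (Hzm : Cmod z = t) by (unfold z; rewrite Cmod_mult, Cmod_R, Hu, Rabs_pos_eq; lra).
  exists z. split. lra. split. lra.
  set (tk := t ^ k).
  assert (Htk0 : 0 < tk) by (apply pow_lt; auto).
  assert (Htk1 : tk <= t). { unfold tk. replace k with (S (k - 1)) by lia. simpl.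
    assert (t ^ (k - 1) <= 1) by (rewrite <- (pow1 (k - 1)); apply pow_incr; lra).
    assert (0 <= t ^ (k - 1)) by (apply pow_le; lra). nra. }
  assert (Hbk : (b k * Cpow z k)%C = (d0 * (s * RtoC tk))%C).
  { unfold z, s, q, tk. rewrite Cpow_mult_l, <- RtoC_pow. field. auto. }
  pose proof (HKb z ltac:(lra)) as HE. rewrite Hzm in HE.
  replace (val b z - c')%C with (d0 * (1 + s * RtoC tk) + (val b z - b 0%nat - b k * Cpow z k))%C
    by (rewrite Hbk; unfold d0; ring).
  eapply Rle_lt_trans. apply Cmod_triangle. rewrite Cmod_mult.
  assert (Hx : Cmod (1 + s * RtoC tk)%C <= 1 - al * tk / 2).
  { assert (Hsq : Cmod (1 + s * RtoC tk)%C ^ 2 = 1 - 2 * al * tk + Cmod s ^ 2 * tk ^ 2).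
    { rewrite !Cmod2_alt. unfold al. destruct s as [a b']. unfold Re, Im; simpl. ring. }
    assert (Cmod s ^ 2 * tk ^ 2 <= al * tk).
    { assert (tk <= al / (Cmod s * Cmod s)) by lra.
      apply (Rmult_le_compat_l (Cmod s * Cmod s)) in H; [|nra].
      replace (Cmod s * Cmod s * (al / (Cmod s * Cmod s))) with al in H by (field; lra). nra. }
    assert (al * tk <= 1).
    { assert (tk <= 1 / Cmod s) by lra. apply (Rmult_le_compat_l (Cmod s)) in H0; [|lra].
      replace (Cmod s * (1 / Cmod s)) with 1 in H0 by (field; lra). nra. }
    pose proof (Cmod_ge_0 (1 + s * RtoC tk)%C). nra. }
  assert (HKt : K * t ^ S k = K * t * tk) by (unfold tk; simpl; ring).
  assert (HKt2 : K * t <= Cmod d0 * al / 4).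
  { apply Rle_trans with (K * (Cmod d0 * al / (4 * (K + 1)))). apply Rmult_le_compat_l; auto.
    apply (Rmult_le_reg_r (4 * (K + 1))). lra. field_simplify; try lra. nra. }
  assert (Cmod d0 * Cmod (1 + s * RtoC tk)%C <= Cmod d0 * (1 - al * tk / 2)) by (apply Rmult_le_compat_l; lra).
  assert (K * t * tk <= Cmod d0 * al / 4 * tk) by (apply Rmult_le_compat_r; lra).
  assert (0 < Cmod d0 * al * tk) by (apply Rmult_lt_0_compat; auto; apply Rmult_lt_0_compat; auto).
  lra.
Qed.
Lemma Cmod_rev_tri x y : Rabs (Cmod x - Cmod y) <= Cmod (x - y).
Proof. apply Rabs_le_between. split.
  - pose proof (Cmod_triangle (y - x) x). replace (y - x + x)%C with y in H by ring.
    replace (y - x)%C with (- (x - y))%C in H by ring. rewrite Cmod_opp in H. lra.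
  - pose proof (Cmod_triangle (x - y) y). replace (x - y + y)%C with x in H by ring. lra. Qed.

Lemma minimize (F : C -> R) (z0 : C) (r L : R) : 0 < r -> 0 <= L -> (forall q, 0 <= F q) ->
  (forall q q', Cmod (q - z0) <= r -> Cmod (q' - z0) <= r -> Rabs (F q - F q') <= L * Cmod (q - q')) ->
  exists qs, Cmod (qs - z0) <= r /\ forall q, Cmod (q - z0) <= r -> F qs <= F q.
Proof. intros Hr HL HF0 HL2.
  set (E := fun y => exists q, Cmod (q - z0) <= r /\ y = - F q).
  destruct (completeness E) as [M [HM1 HM2]].
  { exists 0. intros y [q [_ Hy]]. specialize (HF0 q). lra. }
  { exists (- F z0). exists z0. split; auto. replace (z0 - z0)%C with (RtoC 0) by ring. rewrite Cmod_0; lra. }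
  set (m := - M).
  assert (Hlow : forall q, Cmod (q - z0) <= r -> m <= F q).
  { intros q Hq. assert (E (- F q)) by (exists q; auto). specialize (HM1 _ H). unfold m; lra. }
  set (P := fun (n : nat) q => Cmod (q - z0) <= r /\ F q < m + / (INR n + 1)).
  assert (Happ : forall n, exists q, P n q).
  { intros n. apply NNPP. intros Hn.
    assert (HU : is_upper_bound E (M - / (INR n + 1))).
    { intros y [q [Hq Hy]]. apply Rnot_lt_le. intros Hlt. apply Hn. exists q. split; auto. unfold m; lra. }
    specialize (HM2 _ HU). pose proof (pos_INR n). assert (0 < / (INR n + 1)) by (apply Rinv_0_lt_compat; lra). lra. }
  set (qn := fun n => epsilon (@inhabits C z0) (P n)).
  assert (Hq : forall n, P n (qn n)) by (intros n; apply (epsilon_spec (@inhabits C z0) (P n)); apply Happ).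
  assert (Hy1 : forall n, Cmod ((qn n - z0) / RtoC r) <= 1).
  { intros n. unfold Cdiv. rewrite Cmod_mult, Cmod_inv, Cmod_R, Rabs_pos_eq by (try lra; intros E'; apply RtoC_inj in E'; lra).
    destruct (Hq n) as [H _]. apply (Rmult_le_reg_r r); auto. field_simplify; lra. }
  destruct (BW_C _ Hy1) as [phi [ys [Hphi Hys]]].
  set (qs := (z0 + RtoC r * ys)%C).
  assert (Hrne : RtoC r <> RtoC 0) by (intros E'; apply RtoC_inj in E'; lra).
  assert (Hdist : forall j, Cmod (qn (phi j) - qs) <= r * (2 / (INR j + 1))).
  { intros j. specialize (Hys j).
    replace (qn (phi j) - qs)%C with (RtoC r * ((qn (phi j) - z0) / RtoC r - ys))%C by (unfold qs; field; auto).
    rewrite Cmod_mult, Cmod_R, Rabs_pos_eq by lra. apply Rmult_le_compat_l; lra. }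
  assert (Hys1 : Cmod ys <= 1).
  { apply my_le_epsilon. intros e He. destruct (archi_inv (e / 2)) as [J HJ]. lra.
    specialize (Hys J). specialize (Hy1 (phi J)).
    pose proof (Cmod_triangle ((qn (phi J) - z0) / RtoC r) (ys - (qn (phi J) - z0) / RtoC r)) as Ht.
    replace ((qn (phi J) - z0) / RtoC r + (ys - (qn (phi J) - z0) / RtoC r))%C with ys in Ht by ring.
    replace (ys - (qn (phi J) - z0) / RtoC r)%C with (- ((qn (phi J) - z0) / RtoC r - ys))%C in Ht by ring.
    rewrite Cmod_opp in Ht. replace (2 / (INR J + 1)) with (2 * / (INR J + 1)) in Hys by (unfold Rdiv; ring). lra. }
  assert (Hqs : Cmod (qs - z0) <= r).
  { unfold qs. replace (z0 + RtoC r * ys - z0)%C with (RtoC r * ys)%C by ring.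
    rewrite Cmod_mult, Cmod_R, Rabs_pos_eq by lra. nra. }
  exists qs. split; auto. intros q Hq0. specialize (Hlow q Hq0).
  enough (F qs <= m) by lra.
  apply my_le_epsilon. intros e He.
  destruct (archi_inv (e / (2 * (1 + L * r * 2)))) as [J HJ].
  { apply Rdiv_lt_0_compat; auto. nra. }
  destruct (Hq (phi J)) as [HqJ HFJ].
  specialize (HL2 qs (qn (phi J)) Hqs HqJ). specialize (Hdist J).
  replace (qs - qn (phi J))%C with (- (qn (phi J) - qs))%C in HL2 by ring. rewrite Cmod_opp in HL2.
  apply Rabs_le_between in HL2.
  assert (HphiJ : / (INR (phi J) + 1) <= / (INR J + 1)).
  { apply Rinv_le_contravar. pose proof (pos_INR J); lra. apply Rplus_le_compat_r, le_INR, incr_ge; auto. }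
  assert (Hpos : 0 < 1 + L * r * 2) by nra.
  assert (HJ2 : / (INR J + 1) * (1 + L * r * 2) <= e / 2).
  { apply (Rmult_le_reg_r (/ (1 + L * r * 2))). apply Rinv_0_lt_compat; lra.
    replace (/ (INR J + 1) * (1 + L * r * 2) * / (1 + L * r * 2)) with (/ (INR J + 1)) by (field; pose proof (pos_INR J); lra).
    left. replace (e / 2 * / (1 + L * r * 2)) with (e / (2 * (1 + L * r * 2))) by (field; lra). auto. }
  assert (L * Cmod (qn (phi J) - qs) <= L * (r * (2 / (INR J + 1)))) by (apply Rmult_le_compat_l; auto).
  replace (L * (r * (2 / (INR J + 1)))) with (/ (INR J + 1) * (L * r * 2)) in H by (field; pose proof (pos_INR J); lra).
  nra.
Qed.

Lemma unit_near z0 : Cmod z0 <= 1 -> exists u, Cmod u = 1 /\ Cmod (u - z0) = 1 - Cmod z0.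
Proof. intros Hz. destruct (Ceq_dec z0 (RtoC 0)) as [E|E].
  - subst. exists (RtoC 1). rewrite Cmod_1, Cmod_0. replace (RtoC 1 - RtoC 0)%C with (RtoC 1) by ring. rewrite Cmod_1. split; lra.
  - assert (Hm : 0 < Cmod z0) by (apply Cmod_gt_0; auto).
    exists (z0 * RtoC (/ Cmod z0))%C. split.
    + rewrite Cmod_mult, Cmod_R, Rabs_pos_eq. field. lra. left; apply Rinv_0_lt_compat; auto.
    + replace (z0 * RtoC (/ Cmod z0) - z0)%C with (z0 * RtoC (/ Cmod z0 - 1))%C by (rewrite RtoC_minus; ring).
      rewrite Cmod_mult, Cmod_R, Rabs_pos_eq. field. lra.
      assert (1 <= / Cmod z0). { rewrite <- Rinv_1. apply Rinv_le_contravar; lra. } lra. Qed.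
Lemma in_A_e : in_A e_one.
Proof. intros r Hr. apply (ex_series_incr_1 (K:=R_AbsRing) (V:=R_NormedModule)).
  apply (ex_series_R_le _ (fun n => (/ 2) ^ n)).
  - intros n. unfold e_one. rewrite Cmod_0, Rmult_0_l. split. lra. apply pow_le; lra.
  - apply ex_series_geom. rewrite Rabs_pos_eq; lra. Qed.

Lemma bor_in_A V f : (forall f, V f -> in_A0 f) -> bor V f -> in_A f.
Proof. intros HV0 [[_ E]|[_ [Hf _]]]. subst; apply in_A_e. apply HV0; auto. Qed.

Lemma shift_b0 c rho p b : abs_conv c rho -> Cmod p < rho ->
  (forall z, Cmod z <= rho - Cmod p -> eval b z (val c (p + z)%C)) -> b 0%nat = val c p.
Proof. intros Hc Hp H. assert (E := H (RtoC 0) ltac:(rewrite Cmod_0; lra)).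
  replace (p + RtoC 0)%C with p in E by ring. exact (is_sum_unique _ _ _ (eval_at_0 b) E). Qed.

Lemma shift_const (b : coef) z : (forall n, (1 <= n)%nat -> b n = RtoC 0) -> eval b z (b 0%nat).
Proof. intros H. unfold eval. pose proof (is_sum_first (fun n => (b n * Cpow z n)%C)) as E.
  cbv beta in E. replace (b 0%nat * Cpow z 0)%C with (b 0%nat) in E by (simpl; ring). apply E.
  intros k Hk. rewrite H by auto. ring. Qed.

Lemma Cmod_tri_diff (q z0 : C) : Cmod q <= Cmod z0 + Cmod (q - z0).
Proof. pose proof (Cmod_triangle z0 (q - z0)). replace (z0 + (q - z0))%C with q in H by ring. lra. Qed.

Lemma part2 V g : (forall f, V f -> in_A0 f) -> lu_compact V -> complete (dualT V) -> in_Abar g ->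
  forall w : C, boundaryC (lam_image V g) w ->
     exists f, bor V f /\ exists z : C, Cmod z = 1 /\ eval (hadamard f g) z w.
Proof.
  intros HV0 Hc HT Hg w Hbd.
  assert (Hw : lam_image V g w).
  { apply NNPP. intros Hn.
    destruct (lam_closed V g w Hc Hg) as [d [Hd Hd2]].
    { intros f Hf E. apply Hn. exists f. split; auto. rewrite <- E. apply lam_eval; auto. apply HV0; auto. }
    destruct (proj1 (Hbd d Hd)) as [u [[h [Hh Hhu]] Hu]].
    specialize (Hd2 h Hh). unfold lam in Hd2. rewrite (eval_val _ _ _ Hhu) in Hd2.
    replace (u - w)%C with (- (w - u))%C in Hd2 by ring. rewrite Cmod_opp in Hd2.
    replace (w - u)%C with (- (u - w))%C in Hd2 by ring. rewrite Cmod_opp in Hd2. lra. }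
  destruct (proj1 (part1 V g HV0 Hc HT Hg w) Hw) as [f [Hbf [z0 [Hz0 Hev]]]].
  exists f. split; auto.
  assert (HfA : in_A f) by (eapply bor_in_A; eauto).
  destruct (Rle_lt_or_eq_dec _ _ Hz0) as [Hlt|Heq]; [|exists z0; split; auto].
  destruct (had_conv f g HfA Hg) as [rho [Hrho Hcv]].
  set (c := hadamard f g) in *.
  assert (Hwz : val c z0 = w) by (apply eval_val; auto).
  destruct (taylor_shift c rho z0 Hcv ltac:(lra)) as [b [Hb Hbid]].
  assert (Hb0 : b 0%nat = w) by (rewrite <- Hwz; eapply shift_b0; eauto; lra).
  set (R0 := rho - Cmod z0) in *.
  assert (HR0 : 1 - Cmod z0 < R0) by (unfold R0; lra).
  pose proof (Cmod_ge_0 z0) as Hz00.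
  destruct (classic (exists n, (1 <= n)%nat /\ b n <> RtoC 0)) as [Hnc|Hconst].
  2:{ destruct (unit_near z0 Hz0) as [u [Hu Hud]].
      exists u. split; auto.
      assert (Hc1 : forall n, (1 <= n)%nat -> b n = RtoC 0)
        by (intros n Hn; apply NNPP; intros Hbn; apply Hconst; exists n; auto).
      pose proof (Hbid (u - z0)%C ltac:(lra)) as E1. replace (z0 + (u - z0))%C with u in E1 by ring.
      pose proof (shift_const b (u - z0)%C Hc1) as E2.
      rewrite (is_sum_unique _ _ _ E2 E1) in Hb0. rewrite <- Hb0.
      apply val_eval_conv with rho; auto. lra. }
  exfalso.
  destruct (min_exists _ Hnc) as [k [[Hk1 Hk] Hmin]].
  assert (Hzero : forall n, (1 <= n)%nat -> (n < k)%nat -> b n = RtoC 0)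
    by (intros n H1 H2; apply NNPP; intros Hn; apply (Hmin n H2); auto).
  destruct (lead_est b R0 k ltac:(lra) Hb Hk1 Hzero) as [K [HK HKb]].
  assert (Hbk : 0 < Cmod (b k)) by (apply Cmod_gt_0; auto).
  set (r0 := Rmin (Rmin ((1 - Cmod z0) / 2) ((rho - 1) / 4)) (Rmin (R0 / 2) (Cmod (b k) / (2 * (K + 1))))).
  assert (Hr0 : 0 < r0) by (unfold r0; repeat apply Rmin_glb_lt; try lra; apply Rdiv_lt_0_compat; lra).
  assert (Hr1 : r0 <= (1 - Cmod z0) / 2) by (unfold r0; eapply Rle_trans; [apply Rmin_l|]; apply Rmin_l).
  assert (Hr2 : r0 <= (rho - 1) / 4) by (unfold r0; eapply Rle_trans; [apply Rmin_l|]; apply Rmin_r).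
  assert (Hr3 : r0 <= R0 / 2) by (unfold r0; eapply Rle_trans; [apply Rmin_r|]; apply Rmin_l).
  assert (Hr4 : r0 <= Cmod (b k) / (2 * (K + 1))) by (unfold r0; eapply Rle_trans; [apply Rmin_r|]; apply Rmin_r).
  assert (HKr : K * r0 <= Cmod (b k) / 2).
  { apply Rle_trans with (K * (Cmod (b k) / (2 * (K + 1)))). apply Rmult_le_compat_l; auto.
    apply (Rmult_le_reg_r (2 * (K + 1))). lra.
    replace (K * (Cmod (b k) / (2 * (K + 1))) * (2 * (K + 1))) with (K * Cmod (b k)) by (field; lra). nra. }
  assert (Hr0k : 0 < r0 ^ k) by (apply pow_lt; auto).
  set (mu := Cmod (b k) * r0 ^ k / 2).
  assert (Hmu : 0 < mu) by (unfold mu; apply Rdiv_lt_0_compat; [apply Rmult_lt_0_compat|]; lra).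
  assert (CB : forall zt, Cmod zt = r0 -> mu <= Cmod (val c (z0 + zt) - w)).
  { intros zt Hzt. pose proof (Hbid zt ltac:(lra)) as E. rewrite <- (eval_val _ _ _ E).
    specialize (HKb zt ltac:(lra)). rewrite Hzt, Hb0 in HKb.
    pose proof (Cmod_triangle (val b zt - w) (- (val b zt - w - b k * Cpow zt k))%C) as Ht.
    replace (val b zt - w + - (val b zt - w - b k * Cpow zt k))%C with (b k * Cpow zt k)%C in Ht by ring.
    rewrite Cmod_opp, Cmod_mult, Cmod_pow, Hzt in Ht.
    assert (K * r0 ^ S k <= Cmod (b k) / 2 * r0 ^ k).
    { simpl. replace (K * (r0 * r0 ^ k)) with ((K * r0) * r0 ^ k) by ring. apply Rmult_le_compat_r; lra. }
    unfold mu. lra. }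
  set (dl := mu / 2).
  destruct (proj2 (Hbd dl ltac:(unfold dl; lra))) as [c' [Hc'n Hc'w]].
  set (Lp := Series (fun j => Cmod (c j) * rho ^ j) / (rho - 1)).
  assert (HLp : 0 <= Lp).
  { unfold Lp. apply Rle_mult_inv_pos. apply Series_nonneg; auto. intros; apply abs_conv_nonneg; lra. lra. }
  assert (HD : forall q, Cmod (q - z0) <= r0 -> Cmod q <= 1).
  { intros q Hq. pose proof (Cmod_tri_diff q z0). lra. }
  destruct (minimize (fun q => Cmod (val c q - c')) z0 r0 Lp Hr0 HLp (fun q => Cmod_ge_0 _)) as [qs [Hqs Hmin2]].
  { intros q q' Hq Hq'. eapply Rle_trans. 2: apply (val_lip c rho 1 q q' Hcv ltac:(lra) (HD q Hq) (HD q' Hq')).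
    replace (val c q - val c q')%C with ((val c q - c') - (val c q' - c'))%C by ring. apply Cmod_rev_tri. }
  cbv beta in Hmin2.
  set (ms := Cmod (val c qs - c')) in *.
  assert (Hms : ms < dl).
  { assert (H0 : Cmod (z0 - z0) <= r0) by (replace (z0 - z0)%C with (RtoC 0) by ring; rewrite Cmod_0; lra).
    specialize (Hmin2 z0 H0). rewrite Hwz in Hmin2.
    replace (w - c')%C with (- (c' - w))%C in Hmin2 by ring. rewrite Cmod_opp in Hmin2. lra. }
  assert (Hqin : Cmod (qs - z0) < r0).
  { destruct (Rle_lt_or_eq_dec _ _ Hqs) as [H|H]; auto. exfalso.
    pose proof (CB (qs - z0)%C H) as H0. replace (z0 + (qs - z0))%C with qs in H0 by ring.
    pose proof (Cmod_triangle (val c qs - c') (c' - w)) as Ht.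
    replace (val c qs - c' + (c' - w))%C with (val c qs - w)%C in Ht by ring.
    fold ms in Ht. unfold dl in *. lra. }
  assert (Hqs1 : Cmod qs < 1) by (pose proof (Cmod_tri_diff qs z0); lra).
  destruct (Req_dec ms 0) as [Hm0|Hm0].
  - apply Hc'n. apply (proj2 (part1 V g HV0 Hc HT Hg c')). exists f. split; auto. exists qs. split. lra.
    assert (E : val c qs = c').
    { apply Cmod_eq_0 in Hm0. replace (val c qs) with (val c qs - c' + c')%C by ring. rewrite Hm0. ring. }
    rewrite <- E. apply val_eval_conv with rho; auto. lra.
  - destruct (taylor_shift c rho qs Hcv ltac:(lra)) as [b' [Hb' Hbid']].
    assert (Hb'0 : b' 0%nat = val c qs) by (eapply shift_b0; eauto; lra).
    destruct (classic (exists n, (1 <= n)%nat /\ b' n <> RtoC 0)) as [Hnc'|Hconst'].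
    + assert (Hne : b' 0%nat <> c').
      { rewrite Hb'0. intros E. apply Hm0. unfold ms. rewrite E. replace (c' - c')%C with (RtoC 0) by ring. apply Cmod_0. }
      destruct (dalembert b' (rho - Cmod qs) c' ltac:(lra) Hb' Hne Hnc' (r0 - Cmod (qs - z0)) ltac:(lra))
        as [zt [Hzt1 [Hzt2 Hzt3]]].
      pose proof (Hbid' zt Hzt2) as E. rewrite (eval_val _ _ _ E) in Hzt3. rewrite Hb'0 in Hzt3.
      assert (Hq2 : Cmod (qs + zt - z0) <= r0).
      { pose proof (Cmod_triangle (qs - z0) zt). replace (qs - z0 + zt)%C with (qs + zt - z0)%C in H by ring. lra. }
      specialize (Hmin2 _ Hq2). fold ms in Hzt3. lra.
    + assert (Hc1 : forall n, (1 <= n)%nat -> b' n = RtoC 0)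
        by (intros n Hn; apply NNPP; intros Hbn; apply Hconst'; exists n; auto).
      assert (E1 : val c z0 = val c qs).
      { assert (Hd : Cmod (z0 - qs) <= rho - Cmod qs).
        { replace (z0 - qs)%C with (- (qs - z0))%C by ring. rewrite Cmod_opp. lra. }
        pose proof (Hbid' (z0 - qs)%C Hd) as E. replace (qs + (z0 - qs))%C with z0 in E by ring.
        rewrite <- Hb'0. exact (is_sum_unique _ _ _ E (shift_const b' _ Hc1)). }
      assert (E2 : val c (z0 + RtoC r0) = val c qs).
      { assert (Hd : Cmod (z0 + RtoC r0 - qs) <= rho - Cmod qs).
        { pose proof (Cmod_triangle (- (qs - z0)) (RtoC r0)). rewrite Cmod_opp, Cmod_R, Rabs_pos_eq in H by lra.
          replace (- (qs - z0) + RtoC r0)%C with (z0 + RtoC r0 - qs)%C in H by ring. lra. }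
        pose proof (Hbid' _ Hd) as E. replace (qs + (z0 + RtoC r0 - qs))%C with (z0 + RtoC r0)%C in E by ring.
        rewrite <- Hb'0. exact (is_sum_unique _ _ _ E (shift_const b' _ Hc1)). }
      assert (Hr0m : Cmod (RtoC r0) = r0) by (rewrite Cmod_R, Rabs_pos_eq; lra).
      pose proof (CB (RtoC r0) Hr0m) as H. rewrite E2, <- E1, Hwz in H.
      replace (w - w)%C with (RtoC 0) in H by ring. rewrite Cmod_0 in H. lra.
Qed.

Theorem theorem5 (V : coef -> Prop)
  (HV0 : forall f, V f -> in_A0 f)
  (Hcomp : lu_compact V)
  (HT : complete (dualT V))
  (g : coef) (Hg : in_Abar g) :
  (forall w : C,
     lam_image V g w <->
     exists f, bor V f /\ exists z : C, Cmod z <= 1 /\ eval (hadamard f g) z w) /\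
  (forall w : C,
     boundaryC (lam_image V g) w ->
     exists f, bor V f /\ exists z : C, Cmod z = 1 /\ eval (hadamard f g) z w).
Proof. split. apply part1; auto. apply part2; auto. Qed.
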